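(* Let $a\le k\le n$ be integers and let $\gamma$ be a boundary condition of the one-row region $\{1\}\times[a,n]$ such that the non-$\varnothing$ values of $\gamma_N$ are exactly $[a,k]$ (each once), the non-$\varnothing$ values of $\gamma_S$ are exactly $[a,k]$ (each once), and $\gamma_E(1)=\gamma_W(1)=\varnothing$. Let $w\in S_{[a,n]}$ (resp. $u\in S_{[a,n]}$) be the permutation with $w(\ell)=\gamma_N^{-1}(\ell)$ (resp. $u(\ell)=\gamma_S^{-1}(\ell)$) for $\ell\in[a,k]$ and decreasing on $(k,n]$. Then $u\xrightarrow{k}w$ if and only if there exists a BPD of $\{1\}\times[a,n]$ satisfying $\gamma$. In this case there is exactly one such BPD $D$, and $\{c: D(1,c)\text{ is blank}\}=\mathrm{fix}_{(k,n]}(u,w)$.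
   Context: $S_{[a,n]}$ is the set of bijections of $\mathbb Z$ fixing every integer outside $[a,n]$; $\gamma_N^{-1}(\ell)$ denotes the column $c$ with $\gamma_N(c)=\ell$ (similarly $\gamma_S^{-1}$). $\tau_{i,j}$ is the transposition of $i<j$, $u\tau_{i,j}=u\circ\tau_{i,j}$, $\ell(u)$ = number of inversions; $u\lessdot_k u\tau_{i,j}$ if $i\le k<j$ and $\ell(u\tau_{i,j})=\ell(u)+1$; $u\xrightarrow{k}w$ if there is a chain $u=v_1\lessdot_k\cdots\lessdot_k v_s=w$ ($s\ge1$), $v_{t+1}=v_t\tau_{i_t,j_t}$, with $v_1(i_1)<\cdots<v_{s-1}(i_{s-1})$. $\mathrm{fix}_I(u,w)=\{u(t):t\in I,\ u(t)=w(t)\}$. Bumpless pipedreams on the one-row region: a tiling assigns each cell $(1,c)$, $c\in[a,n]$, one of: blank; horizontal (pipe joining left and right edges); vertical (top and bottom); r-elbow (bottom and right); j-elbow (top and left); cross (a left–right and a top–bottom pipe, which cross, the top–bottom one vertical). Consistent: adjacent cells agree on whether a pipe uses their common edge. A pipe enters from the row if it crosses the right edge of $(1,n)$, exits from the row if it crosses the left edge of $(1,a)$, enters (exits) from column $c$ if it crosses the top (bottom) edge of $(1,c)$. A BPD is a consistent tiling in which any two pipes cross at most once and every pipe enters and exits. A labeling (distinct integers on pipes) is valid if at each crossing the vertical pipe has the smaller label. A boundary condition $\gamma=(\gamma_N,\gamma_E,\gamma_S,\gamma_W)$, $\gamma_N,\gamma_S:[a,n]\to\mathbb Z\sqcup\{\varnothing\}$,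 $\gamma_E,\gamma_W:\{1\}\to\mathbb Z\sqcup\{\varnothing\}$, is satisfied by a BPD if some valid labeling makes a pipe enter (exit) from the row iff $\gamma_E(1)\neq\varnothing$ ($\gamma_W(1)\ne\varnothing$), with that label, and a pipe enter (exit) from column $c$ iff $\gamma_N(c)\neq\varnothing$ ($\gamma_S(c)\ne\varnothing$), with that label. *)

(* Defs.v *)
From Stdlib Require Import ZArith List Relations Bool.
Import ListNotations.
Open Scope Z_scope.

Definition in_S (a n : Z) (w : Z -> Z) : Prop :=
  (forall x y, w x = w y -> x = y) /\ (forall y, exists x, w x = y) /\
  (forall x, x < a \/ n < x -> w x = x).

(* transposition tau_{i,j}; u tau_{i,j} = fun x => u (tau i j x) *)
Definition tau (i j : Z) (x : Z) : Z :=
  if Z.eq_dec x i then j else if Z.eq_dec x j then i else x.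

Definition zrange (lo hi : Z) : list Z :=
  map (fun t => lo + Z.of_nat t) (seq 0 (Z.to_nat (hi - lo + 1))).

Definition ninv_win (v : Z -> Z) (lo hi : Z) : nat :=
  length (filter (fun p => andb (fst p <? snd p) (v (snd p) <? v (fst p)))
                 (list_prod (zrange lo hi) (zrange lo hi))).

(* For a bijection with
   finite support this is computed on any window containing the support
   (inversions never involve a fixed point outside such a window). *)
Definition has_length (v : Z -> Z) (L : nat) : Prop :=
  exists lo hi, (forall x, x < lo \/ hi < x -> v x = x) /\ ninv_win v lo hi = L.

Definition kcover (k : Z) (u : Z -> Z) (i j : Z) (v : Z -> Z) : Prop :=
  i <= k < j /\ (forall x, v x = u (tau i j x)) /\
  exists L, has_length u L /\ has_length v (S L).

(* u --k--> w : a chain u = v_0 ⋖_k v_1 ⋖_k ... ⋖_k v_m = w (m >= 0, i.e.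
   s = m+1 >= 1), v_{t+1} = v_t tau_{I t, J t}, with
   v_0(I 0) < v_1(I 1) < ... < v_{m-1}(I (m-1)). *)
Definition kchain (k : Z) (u w : Z -> Z) : Prop :=
  exists (m : nat) (v : nat -> Z -> Z) (I J : nat -> Z),
    (forall x, v O x = u x) /\ (forall x, v m x = w x) /\
    (forall t, (t < m)%nat -> kcover k (v t) (I t) (J t) (v (S t))) /\
    (forall t, (S t < m)%nat -> v t (I t) < v (S t) (I (S t))).

Definition in_fix (k n : Z) (u w : Z -> Z) (c : Z) : Prop :=
  exists t, k < t <= n /\ u t = w t /\ c = u t.

Inductive tile : Type :=
  | Blank | Hor | Vrt | RElb (* bottom & right *) | JElb (* top & left *) | Cross.

(* A tiling of the row: column c |-> tile of cell (1,c); only c in [a,n] matter. *)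
Definition tiling := Z -> tile.

(* Edges of the row: top / bottom edge of cell (1,c), and the vertical line
   EV c between columns c and c+1 (EV (a-1) = left edge of (1,a),
   EV n = right edge of (1,n)). *)
Inductive edge : Type :=
  | ETop (c : Z) | EBot (c : Z) | EV (c : Z).

Definition tile_link (t : tile) (c : Z) (e e' : edge) : Prop :=
  match t with
  | Blank => False
  | Hor => e = EV (c - 1) /\ e' = EV c
  | Vrt => e = ETop c /\ e' = EBot c
  | RElb => e = EBot c /\ e' = EV c
  | JElb => e = ETop c /\ e' = EV (c - 1)
  | Cross => (e = EV (c - 1) /\ e' = EV c) \/ (e = ETop c /\ e' = EBot c)
  end.

Definition link (a n : Z) (D : tiling) (e e' : edge) : Prop :=
  exists c, a <= c <= n /\ tile_link (D c) c e e'.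

Definition used (a n : Z) (D : tiling) (e : edge) : Prop :=
  exists e', link a n D e e' \/ link a n D e' e.

Definition conn (a n : Z) (D : tiling) : relation edge :=
  clos_refl_sym_trans edge (link a n D).

Definition uses_left (t : tile) : bool :=
  match t with Hor | JElb | Cross => true | _ => false end.
Definition uses_right (t : tile) : bool :=
  match t with Hor | RElb | Cross => true | _ => false end.

Definition consistent (a n : Z) (D : tiling) : Prop :=
  forall c, a <= c < n -> uses_right (D c) = uses_left (D (c + 1)).

(* At a cross tile at c, the vertical pipe is the one through ETop c and the
   horizontal pipe the one through EV c.  Two pipes cross at most once. *)
Definition cross_at_most_once (a n : Z) (D : tiling) : Prop :=
  forall c c', a <= c <= n -> a <= c' <= n -> c <> c' ->
    D c = Cross -> D c' = Cross ->
    ~ ((conn a n D (ETop c) (ETop c') /\ conn a n D (EV c) (EV c')) \/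
       (conn a n D (ETop c) (EV c') /\ conn a n D (EV c) (ETop c'))).

Definition is_entry (a n : Z) (e : edge) : Prop :=
  (exists c, a <= c <= n /\ e = ETop c) \/ e = EV n.
Definition is_exit (a n : Z) (e : edge) : Prop :=
  (exists c, a <= c <= n /\ e = EBot c) \/ e = EV (a - 1).

Definition enters_exits (a n : Z) (D : tiling) : Prop :=
  forall e, used a n D e ->
    (exists e1, is_entry a n e1 /\ used a n D e1 /\ conn a n D e e1) /\
    (exists e2, is_exit a n e2 /\ used a n D e2 /\ conn a n D e e2).

Definition is_BPD (a n : Z) (D : tiling) : Prop :=
  consistent a n D /\ cross_at_most_once a n D /\ enters_exits a n D.

Definition valid_labeling (a n : Z) (D : tiling) (lab : edge -> Z) : Prop :=
  (forall e e', used a n D e -> used a n D e' ->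
     (conn a n D e e' <-> lab e = lab e')) /\
  (forall c, a <= c <= n -> D c = Cross -> lab (ETop c) < lab (EV c)).

(* boundary condition gamma = (gN, gE, gS, gW); None = ∅ *)
Definition satisfies (a n : Z) (D : tiling)
    (gN : Z -> option Z) (gE : option Z) (gS : Z -> option Z) (gW : option Z)
    : Prop :=
  exists lab, valid_labeling a n D lab /\
    (used a n D (EV n) <-> gE <> None) /\
    (forall l, gE = Some l -> lab (EV n) = l) /\
    (used a n D (EV (a - 1)) <-> gW <> None) /\
    (forall l, gW = Some l -> lab (EV (a - 1)) = l) /\
    (forall c, a <= c <= n ->
       (used a n D (ETop c) <-> gN c <> None) /\
       (forall l, gN c = Some l -> lab (ETop c) = l)) /\
    (forall c, a <= c <= n ->
       (used a n D (EBot c) <-> gS c <> None) /\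
       (forall l, gS c = Some l -> lab (EBot c) = l)).

Definition values_exactly (a k n : Z) (g : Z -> option Z) : Prop :=
  (forall c l, a <= c <= n -> g c = Some l -> a <= l <= k) /\
  (forall l, a <= l <= k -> exists c, a <= c <= n /\ g c = Some l) /\
  (forall c c' l, a <= c <= n -> a <= c' <= n ->
     g c = Some l -> g c' = Some l -> c = c').

(* Main.v *)
Require Import Defs.
From Stdlib Require Import ZArith List Relations Bool Lia Classical FunctionalExtensionality.
Import ListNotations.
Open Scope Z_scope.

Definition zsum (f : Z -> Z) (l : list Z) : Z :=
  fold_right (fun x acc => f x + acc) 0 l.
Definition ind (b : bool) : Z := if b then 1 else 0.

Lemma zsum_nil f : zsum f [] = 0. Proof. reflexivity. Qed.
Lemma zsum_cons f x l : zsum f (x :: l) = f x + zsum f l. Proof. reflexivity. Qed.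

Lemma zsum_ext (f g : Z -> Z) l : (forall x, In x l -> f x = g x) -> zsum f l = zsum g l.
Proof. induction l; simpl; intros H; auto. rewrite H, IHl; auto. Qed.

Lemma zsum_add f g l : zsum (fun x => f x + g x) l = zsum f l + zsum g l.
Proof. induction l; simpl; lia. Qed.

Lemma zsum_scal c f l : zsum (fun x => c * f x) l = c * zsum f l.
Proof. induction l; simpl; lia. Qed.

Lemma zsum_le f g l : (forall x, In x l -> f x <= g x) -> zsum f l <= zsum g l.
Proof. induction l; simpl; intros H; [lia|]. specialize (IHl (fun x Hx => H x (or_intror Hx))).
  specialize (H a (or_introl eq_refl)). lia. Qed.

Lemma zsum_0 l : zsum (fun _ => 0) l = 0. Proof. induction l; simpl; lia. Qed.

Lemma zsum_pt (i c : Z) l : NoDup l -> In i l ->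
  zsum (fun p => if Z.eq_dec p i then c else 0) l = c.
Proof.
  induction l as [|x l IH]; simpl; intros Hnd Hin; [contradiction|].
  inversion Hnd; subst.
  destruct (Z.eq_dec x i).
  - subst. rewrite (zsum_ext _ (fun _ => 0)). rewrite zsum_0; lia.
    intros y Hy. destruct (Z.eq_dec y i); subst; auto. contradiction.
  - destruct Hin; [congruence|]. rewrite IH; auto.
Qed.

Lemma zsum_app f l1 l2 : zsum f (l1 ++ l2) = zsum f l1 + zsum f l2.
Proof. induction l1; simpl; lia. Qed.

Lemma zrange_nil lo hi : hi < lo -> zrange lo hi = [].
Proof. intros. unfold zrange. replace (Z.to_nat (hi - lo + 1)) with O by lia. reflexivity. Qed.

Lemma zrange_cons lo hi : lo <= hi -> zrange lo hi = lo :: zrange (lo + 1) hi.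
Proof.
  intros H. unfold zrange.
  replace (Z.to_nat (hi - lo + 1)) with (S (Z.to_nat (hi - (lo + 1) + 1))) by lia.
  simpl. f_equal; [lia|].
  rewrite <- seq_shift, map_map. apply map_ext. intros; lia.
Qed.

Lemma zrange_ind (P : Z -> Z -> Prop) :
  (forall lo hi, hi < lo -> P lo hi) ->
  (forall lo hi, lo <= hi -> P (lo + 1) hi -> P lo hi) ->
  forall lo hi, P lo hi.
Proof.
  intros H1 H2 lo hi.
  remember (Z.to_nat (hi - lo + 1)) as N eqn:HN. revert lo HN.
  induction N; intros lo HN.
  - apply H1. lia.
  - apply H2. lia. apply IHN. lia.
Qed.

Lemma in_zrange x lo hi : In x (zrange lo hi) <-> lo <= x <= hi.
Proof.
  revert x. pattern lo, hi. apply zrange_ind; clear lo hi; intros lo hi H.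
  - rewrite zrange_nil by lia. simpl. lia.
  - intros IH x. rewrite zrange_cons by lia. simpl. rewrite IH. lia.
Qed.

Lemma nodup_zrange lo hi : NoDup (zrange lo hi).
Proof.
  pattern lo, hi. apply zrange_ind; clear lo hi; intros lo hi H.
  - rewrite zrange_nil by lia. constructor.
  - intros IH. rewrite zrange_cons by lia. constructor; auto.
    rewrite in_zrange. lia.
Qed.

Lemma zrange_split lo m hi : lo <= m + 1 -> m <= hi ->
  zrange lo hi = zrange lo m ++ zrange (m + 1) hi.
Proof.
  intros H1 H2. revert H1 H2.
  pattern lo, m. apply zrange_ind; clear lo m; intros lo m H.
  - intros H1 H2. replace lo with (m+1) by lia. rewrite (zrange_nil (m+1) m) by lia. reflexivity.
  - intros IH H1 H2. rewrite (zrange_cons lo hi) by lia. rewrite (zrange_cons lo m) by lia.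
    simpl. f_equal. apply IH; lia.
Qed.

Lemma zsum_restrict f lo hi lo' hi' : lo' <= lo -> hi <= hi' ->
  zsum (fun p => if (lo <=? p) && (p <=? hi) then f p else 0) (zrange lo' hi') =
  zsum f (zrange lo hi).
Proof.
  intros H1 H2.
  destruct (Z_le_gt_dec lo (hi + 1)).
  - rewrite (zrange_split lo' (lo - 1) hi') by lia.
    replace (lo - 1 + 1) with lo by lia.
    rewrite (zrange_split lo hi hi') by lia.
    rewrite !zsum_app.
    rewrite (zsum_ext _ (fun _ => 0) (zrange lo' (lo-1))).
    2:{ intros x Hx. apply in_zrange in Hx. replace (lo <=? x) with false by (symmetry; apply Z.leb_gt; lia). reflexivity. }
    rewrite (zsum_ext _ (fun _ => 0) (zrange (hi+1) hi')).
    2:{ intros x Hx. apply in_zrange in Hx. destruct (lo <=? x); simpl; auto. replace (x <=? hi) with false by (symmetry; apply Z.leb_gt; lia). reflexivity. }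
    rewrite (zsum_ext _ f (zrange lo hi)).
    2:{ intros x Hx. apply in_zrange in Hx. replace (lo <=? x) with true by (symmetry; apply Z.leb_le; lia).
        replace (x <=? hi) with true by (symmetry; apply Z.leb_le; lia). reflexivity. }
    rewrite !zsum_0. lia.
  - rewrite (zrange_nil lo hi) by lia. rewrite zsum_nil.
    rewrite (zsum_ext _ (fun _ => 0)). apply zsum_0.
    intros x _. destruct (lo <=? x) eqn:E1; simpl; auto. apply Z.leb_le in E1.
    replace (x <=? hi) with false by (symmetry; apply Z.leb_gt; lia). reflexivity.
Qed.

Lemma filter_prod_len (f : Z * Z -> bool) A B :
  Z.of_nat (length (filter f (list_prod A B))) =
  zsum (fun p => zsum (fun q => ind (f (p, q))) B) A.
Proof.
  induction A as [|a A IH]; simpl; auto.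
  rewrite filter_app, length_app, Nat2Z.inj_add, IH. f_equal.
  clear IH. induction B as [|b B IHB]; [reflexivity|].
  rewrite zsum_cons. cbn [map filter]. destruct (f (a, b)) eqn:E; cbn [length]; rewrite ?Nat2Z.inj_succ, IHB; unfold ind; lia.
Qed.

Definition inv_ind (v : Z -> Z) (p q : Z) : Z := ind ((p <? q) && (v q <? v p)).

Lemma ninv_zsum v lo hi : Z.of_nat (ninv_win v lo hi) =
  zsum (fun p => zsum (fun q => inv_ind v p q) (zrange lo hi)) (zrange lo hi).
Proof. unfold ninv_win. rewrite filter_prod_len. reflexivity. Qed.

Definition injZ (v : Z -> Z) := forall x y, v x = v y -> x = y.

Lemma maps_into v lo hi : injZ v -> (forall x, x < lo \/ hi < x -> v x = x) ->
  forall x, lo <= x <= hi -> lo <= v x <= hi.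
Proof.
  intros Hi Hf x Hx. destruct (Z_le_gt_dec lo (v x)); destruct (Z_le_gt_dec (v x) hi); try lia;
  assert (v (v x) = v x) by (apply Hf; lia); apply Hi in H; lia.
Qed.

Lemma ninv_extend v lo hi lo' hi' : injZ v -> (forall x, x < lo \/ hi < x -> v x = x) ->
  lo' <= lo -> hi <= hi' -> ninv_win v lo' hi' = ninv_win v lo hi.
Proof.
  intros Hi Hf H1 H2. apply Nat2Z.inj. rewrite !ninv_zsum.
  pose proof (maps_into v lo hi Hi Hf) as Hm.
  rewrite <- (zsum_restrict _ lo hi lo' hi') by lia.
  apply zsum_ext. intros p Hp.
  rewrite <- (zsum_restrict _ lo hi lo' hi') by lia.
  destruct ((lo <=? p) && (p <=? hi)) eqn:Ep.
  - apply zsum_ext. intros q Hq. destruct ((lo <=? q) && (q <=? hi)) eqn:Eq; auto.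
    apply andb_true_iff in Ep. destruct Ep as [Ep1 Ep2]. apply Z.leb_le in Ep1, Ep2.
    assert (q < lo \/ hi < q) as Hq'.
    { destruct (lo <=? q) eqn:E1; destruct (q <=? hi) eqn:E2; try discriminate;
      rewrite ?Z.leb_le, ?Z.leb_gt in *; lia. }
    specialize (Hf q Hq'). specialize (Hm p (conj Ep1 Ep2)).
    unfold inv_ind, ind. destruct (p <? q) eqn:E1; simpl; auto.
    destruct (v q <? v p) eqn:E2; auto. rewrite Z.ltb_lt in *. lia.
  - rewrite <- (zsum_0 (zrange lo' hi')). apply zsum_ext. intros q Hq.
    assert (p < lo \/ hi < p) as Hp'.
    { destruct (lo <=? p) eqn:E1; destruct (p <=? hi) eqn:E2; try discriminate;
      rewrite ?Z.leb_le, ?Z.leb_gt in *; lia. }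
    pose proof (Hf p Hp') as Hfp.
    unfold inv_ind, ind. destruct (p <? q) eqn:E1; simpl; auto.
    destruct (v q <? v p) eqn:E2; auto. rewrite Z.ltb_lt in *. exfalso.
    destruct (Z_le_gt_dec lo q); destruct (Z_le_gt_dec q hi).
    + specialize (Hm q ltac:(lia)). lia.
    + rewrite (Hf q) in E2 by lia. lia.
    + rewrite (Hf q) in E2 by lia. lia.
    + rewrite (Hf q) in E2 by lia. lia.
Qed.

Lemma zsum_sub f g l : zsum (fun x => f x - g x) l = zsum f l - zsum g l.
Proof. induction l; simpl; lia. Qed.

Lemma double_extract (h : Z -> Z -> Z) W i j : NoDup W -> In i W -> In j W -> i <> j ->
  (forall p q, p <> i -> p <> j -> q <> i -> q <> j -> h p q = 0) ->
  zsum (fun p => zsum (fun q => h p q) W) W =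
  zsum (fun p => h i p + h j p + (if Z.eq_dec p i then 0 else if Z.eq_dec p j then 0 else h p i + h p j)) W.
Proof.
  intros Hnd Hi Hj Hij H0.
  rewrite (zsum_ext _ (fun p => (if Z.eq_dec p i then zsum (fun q => h i q) W else 0)
     + (if Z.eq_dec p j then zsum (fun q => h j q) W else 0)
     + (if Z.eq_dec p i then 0 else if Z.eq_dec p j then 0 else h p i + h p j))).
  2:{ intros p Hp. destruct (Z.eq_dec p i); [subst; repeat destruct Z.eq_dec; try congruence; lia|].
      destruct (Z.eq_dec p j); [subst; repeat destruct Z.eq_dec; try congruence; lia|].
      rewrite (zsum_ext _ (fun q => (if Z.eq_dec q i then h p i else 0) + (if Z.eq_dec q j then h p j else 0))).
      - rewrite zsum_add, !zsum_pt; auto; lia.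
      - intros q Hq. destruct (Z.eq_dec q i); [subst; repeat destruct Z.eq_dec; try congruence; lia|].
        destruct (Z.eq_dec q j); [subst; repeat destruct Z.eq_dec; try congruence; lia|]. rewrite H0; auto. }
  rewrite !zsum_add, !zsum_pt; auto.
Qed.

Definition vt (v : Z -> Z) (i j : Z) : Z -> Z := fun x => v (tau i j x).

Definition Ssum (v : Z -> Z) W := zsum (fun p => zsum (fun q => inv_ind v p q) W) W.

Definition Efun v i j p :=
  let h := fun p q => inv_ind (vt v i j) p q - inv_ind v p q in
  h i p + h j p + (if Z.eq_dec p i then 0 else if Z.eq_dec p j then 0 else h p i + h p j).

Lemma Ssum_diff v i j W : NoDup W -> In i W -> In j W -> i <> j ->
  Ssum (vt v i j) W - Ssum v W = zsum (Efun v i j) W.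
Proof.
  intros. unfold Ssum. rewrite <- zsum_sub.
  rewrite (zsum_ext _ (fun p => zsum (fun q => inv_ind (vt v i j) p q - inv_ind v p q) W)).
  2:{ intros. rewrite zsum_sub. reflexivity. }
  rewrite (double_extract (fun p q => inv_ind (vt v i j) p q - inv_ind v p q) W i j); auto.
  intros p q H3 H4 H5 H6. unfold inv_ind, vt, tau.
  destruct (Z.eq_dec p i); try congruence. destruct (Z.eq_dec p j); try congruence.
  destruct (Z.eq_dec q i); try congruence. destruct (Z.eq_dec q j); try congruence. lia.
Qed.

Ltac ltb_cases :=
  repeat match goal with
  | |- context [?x <? ?y] => destruct (Z.ltb_spec x y)
  end.

Lemma Efun_pos v i j p : injZ v -> i < j -> v i < v j ->
  Efun v i j p = (if Z.eq_dec p j then 1 else 0) +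
     2 * ind ((i <? p) && (p <? j) && (v i <? v p) && (v p <? v j)).
Proof.
  intros Hinj Hij Hv. unfold Efun, inv_ind, vt, tau, ind.
  assert (forall x y, x <> y -> v x <> v y) as Hn by (intros x y Hxy E; apply Hinj in E; congruence).
  destruct (Z.eq_dec i i); [|congruence]. destruct (Z.eq_dec j i); [lia|]. destruct (Z.eq_dec j j); [|congruence].
  destruct (Z.eq_dec p i); [subst; ltb_cases; simpl; repeat destruct Z.eq_dec; lia|].
  destruct (Z.eq_dec p j); [subst; ltb_cases; simpl; repeat destruct Z.eq_dec; lia|].
  pose proof (Hn p i n0) as H1. pose proof (Hn p j n1) as H2.
  ltb_cases; simpl; repeat destruct Z.eq_dec; lia.
Qed.

Lemma Efun_neg v i j p : injZ v -> i < j -> v j < v i ->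
  Efun v i j p = - (if Z.eq_dec p j then 1 else 0) -
     2 * ind ((i <? p) && (p <? j) && (v j <? v p) && (v p <? v i)).
Proof.
  intros Hinj Hij Hv. unfold Efun, inv_ind, vt, tau, ind.
  assert (forall x y, x <> y -> v x <> v y) as Hn by (intros x y Hxy E; apply Hinj in E; congruence).
  destruct (Z.eq_dec i i); [|congruence]. destruct (Z.eq_dec j i); [lia|]. destruct (Z.eq_dec j j); [|congruence].
  destruct (Z.eq_dec p i); [subst; ltb_cases; simpl; repeat destruct Z.eq_dec; lia|].
  destruct (Z.eq_dec p j); [subst; ltb_cases; simpl; repeat destruct Z.eq_dec; lia|].
  pose proof (Hn p i n0) as H1. pose proof (Hn p j n1) as H2.
  ltb_cases; simpl; repeat destruct Z.eq_dec; lia.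
Qed.

Lemma zsum_ind_nonneg f l : 0 <= zsum (fun p => ind (f p)) l.
Proof. induction l; simpl; [lia|]. unfold ind at 1. destruct (f a); lia. Qed.

Lemma len_step_iff v i j lo hi : injZ v -> lo <= i -> i < j -> j <= hi ->
  (ninv_win (vt v i j) lo hi = S (ninv_win v lo hi) <->
   (v i < v j /\ forall p, i < p < j -> ~ (v i < v p < v j))).
Proof.
  intros Hinj H1 H2 H3.
  set (W := zrange lo hi).
  assert (NoDup W) by apply nodup_zrange.
  assert (In i W) by (apply in_zrange; lia).
  assert (In j W) by (apply in_zrange; lia).
  pose proof (Ssum_diff v i j W H H0 H4 ltac:(lia)) as HD.
  assert (Hs : forall w, Ssum w W = Z.of_nat (ninv_win w lo hi)) by (intros; rewrite ninv_zsum; reflexivity).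
  rewrite !Hs in HD.
  assert (v i <> v j) by (intros E; apply Hinj in E; lia).
  split.
  - intros E. rewrite E, Nat2Z.inj_succ in HD.
    destruct (Z_lt_le_dec (v i) (v j)).
    + split; auto. intros p Hp Hv.
      rewrite (zsum_ext _ (fun p => (if Z.eq_dec p j then 1 else 0) +
          2 * ind ((i <? p) && (p <? j) && (v i <? v p) && (v p <? v j)))) in HD
        by (intros; apply Efun_pos; auto).
      rewrite zsum_add, zsum_pt, zsum_scal in HD; auto.
      assert (1 <= zsum (fun p0 => ind ((i <? p0) && (p0 <? j) && (v i <? v p0) && (v p0 <? v j))) W).
      { rewrite <- (zsum_pt p 1 W); auto. 2:{ apply in_zrange; lia. }
        apply zsum_le. intros x Hx. destruct (Z.eq_dec x p); [subst|unfold ind; destruct (_ && _); lia].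
        unfold ind. replace ((i <? p) && (p <? j) && (v i <? v p) && (v p <? v j)) with true; [lia|].
        symmetry. rewrite !andb_true_iff, !Z.ltb_lt. lia. }
      lia.
    + exfalso.
      rewrite (zsum_ext _ (fun p => - (if Z.eq_dec p j then 1 else 0) -
          2 * ind ((i <? p) && (p <? j) && (v j <? v p) && (v p <? v i)))) in HD
        by (intros; apply Efun_neg; auto; lia).
      rewrite zsum_sub, zsum_scal in HD.
      rewrite (zsum_ext (fun x => - (if Z.eq_dec x j then 1 else 0)) (fun x => (-1) * (if Z.eq_dec x j then 1 else 0))) in HD by (intros; lia).
      rewrite zsum_scal, zsum_pt in HD; auto.
      pose proof (zsum_ind_nonneg (fun p => (i <? p) && (p <? j) && (v j <? v p) && (v p <? v i)) W). lia.
  - intros [Hlt Hno]. apply Nat2Z.inj. rewrite Nat2Z.inj_succ.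
    rewrite (zsum_ext _ (fun p => (if Z.eq_dec p j then 1 else 0) +
          2 * ind ((i <? p) && (p <? j) && (v i <? v p) && (v p <? v j)))) in HD
        by (intros; apply Efun_pos; auto).
    rewrite zsum_add, zsum_pt, zsum_scal in HD; auto.
    rewrite (zsum_ext _ (fun _ => 0)) in HD. rewrite zsum_0 in HD. lia.
    intros x Hx. unfold ind. destruct ((i <? x) && (x <? j) && (v i <? v x) && (v x <? v j)) eqn:E; auto.
    rewrite !andb_true_iff, !Z.ltb_lt in E. exfalso. apply (Hno x); lia.
Qed.


Lemma tau_invol i j x : tau i j (tau i j x) = x.
Proof. unfold tau. repeat destruct Z.eq_dec; subst; lia. Qed.

Lemma injZ_vt v i j : injZ v -> injZ (vt v i j).
Proof. intros H x y E. unfold vt in E. apply H in E. rewrite <- (tau_invol i j x), E, tau_invol. auto. Qed.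

Lemma kcover_dest k v i j v' : injZ v -> kcover k v i j v' ->
  i <= k < j /\ v' = vt v i j /\ v i < v j /\ forall p, i < p < j -> ~ (v i < v p < v j).
Proof.
  intros Hinj [Hk [Hv' [L [[lo1 [hi1 [Hf1 HL1]]] [lo2 [hi2 [Hf2 HL2]]]]]]].
  assert (E : v' = vt v i j) by (apply functional_extensionality; intros; rewrite Hv'; reflexivity).
  subst v'.
  set (lo := Z.min (Z.min lo1 lo2) i). set (hi := Z.max (Z.max hi1 hi2) j).
  rewrite <- (ninv_extend v lo1 hi1 lo hi) in HL1 by (auto; lia).
  rewrite <- (ninv_extend (vt v i j) lo2 hi2 lo hi) in HL2 by (auto using injZ_vt; lia).
  rewrite <- HL1 in HL2.
  apply (len_step_iff v i j lo hi) in HL2; auto; try lia.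
Qed.

Lemma vt_fix v i j lo hi : lo <= i <= hi -> lo <= j <= hi ->
  (forall x, x < lo \/ hi < x -> v x = x) -> forall x, x < lo \/ hi < x -> vt v i j x = x.
Proof. intros. unfold vt, tau. repeat destruct Z.eq_dec; subst; try lia. auto. Qed.

Lemma kcover_make k v i j lo hi : injZ v -> (forall x, x < lo \/ hi < x -> v x = x) ->
  lo <= i -> i <= k < j -> j <= hi -> v i < v j -> (forall p, i < p < j -> ~ (v i < v p < v j)) ->
  kcover k v i j (vt v i j).
Proof.
  intros Hinj Hf H1 H2 H3 H4 H5. split; [lia|]. split; [reflexivity|].
  exists (ninv_win v lo hi). split.
  - exists lo, hi. auto.
  - exists lo, hi. split. apply vt_fix; auto; lia.
    apply len_step_iff; auto; lia.
Qed.

Definition decr_on k n (f : Z -> Z) := forall x y, k < x /\ x < y <= n -> f y < f x.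

Definition CH a k n (u w : Z -> Z) (m : nat) (v : nat -> Z -> Z) (I J : nat -> Z) : Prop :=
  in_S a n u /\ in_S a n w /\ decr_on k n u /\ decr_on k n w /\
  v O = u /\ v m = w /\
  (forall t, (t < m)%nat -> I t <= k < J t /\ v (S t) = vt (v t) (I t) (J t) /\
      v t (I t) < v t (J t) /\ forall p, I t < p < J t -> ~ (v t (I t) < v t p < v t (J t))) /\
  (forall t, (S t < m)%nat -> v t (I t) < v (S t) (I (S t))) /\
  (forall t, (t <= m)%nat -> injZ (v t)).

Lemma vt_i v i j : vt v i j i = v j.
Proof. unfold vt, tau. destruct Z.eq_dec; [auto|congruence]. Qed.
Lemma vt_j v i j : vt v i j j = v i.
Proof. unfold vt, tau. repeat destruct Z.eq_dec; subst; auto; congruence. Qed.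
Lemma vt_o v i j x : x <> i -> x <> j -> vt v i j x = v x.
Proof. intros. unfold vt, tau. repeat destruct Z.eq_dec; subst; auto; congruence. Qed.

Lemma kchain_CH a k n u w : in_S a n u -> in_S a n w -> decr_on k n u -> decr_on k n w ->
  kchain k u w -> exists m v I J, CH a k n u w m v I J.
Proof.
  intros Hu Hw Du Dw [m [v [I [J [H0 [Hm [Hc Hinc]]]]]]].
  assert (Hinj : forall t, (t <= m)%nat -> injZ (v t)).
  { induction t; intros Ht.
    - intros x y E. rewrite !H0 in E. destruct Hu as [Hi _]. auto.
    - destruct (kcover_dest k (v t) (I t) (J t) (v (S t))) as [_ [E _]].
      { apply IHt; lia. } { apply Hc; lia. }
      rewrite E. apply injZ_vt. apply IHt; lia. }
  exists m, v, I, J. unfold CH.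
  split; [auto|]. split; [auto|]. split; [auto|]. split; [auto|].
  split; [apply functional_extensionality; auto|].
  split; [apply functional_extensionality; auto|].
  split; [|split; auto].
  intros t Ht. destruct (kcover_dest k (v t) (I t) (J t) (v (S t))) as [A [B [C D]]].
  { apply Hinj; lia. } { apply Hc; lia. }
  auto.
Qed.

Ltac dCH H := destruct H as (Hu & Hw & Du & Dw & Hv0 & Hvm & Hst & Hinc & Hinj).

Lemma ch_right_step a k n u w m v I J t r : CH a k n u w m v I J -> (t < m)%nat -> k < r ->
  v (S t) r <= v t r.
Proof.
  intros H Ht Hr. pose proof H as H'. dCH H'. destruct (Hst t Ht) as (A & B & C & D).
  rewrite B. destruct (Z.eq_dec r (J t)).
  - subst. rewrite vt_j. lia.
  - rewrite vt_o; lia.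
Qed.

Lemma ch_left_step a k n u w m v I J t l : CH a k n u w m v I J -> (t < m)%nat -> l <= k ->
  v t l <= v (S t) l.
Proof.
  intros H Ht Hr. pose proof H as H'. dCH H'. destruct (Hst t Ht) as (A & B & C & D).
  rewrite B. destruct (Z.eq_dec l (I t)).
  - subst. rewrite vt_i. lia.
  - rewrite vt_o; lia.
Qed.

Lemma ch_right_mono a k n u w m v I J t t' r : CH a k n u w m v I J -> (t <= t')%nat -> (t' <= m)%nat -> k < r ->
  v t' r <= v t r.
Proof.
  intros H H1 H2 Hr. induction t'.
  - replace t with O by lia. lia.
  - destruct (Nat.eq_dec t (S t')). subst; lia.
    pose proof (ch_right_step a k n u w m v I J t' r H ltac:(lia) Hr). specialize (IHt' ltac:(lia) ltac:(lia)). lia.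
Qed.

Lemma ch_left_mono a k n u w m v I J t t' l : CH a k n u w m v I J -> (t <= t')%nat -> (t' <= m)%nat -> l <= k ->
  v t l <= v t' l.
Proof.
  intros H H1 H2 Hr. induction t'.
  - replace t with O by lia. lia.
  - destruct (Nat.eq_dec t (S t')). subst; lia.
    pose proof (ch_left_step a k n u w m v I J t' l H ltac:(lia) Hr). specialize (IHt' ltac:(lia) ltac:(lia)). lia.
Qed.

Lemma ch_X_incr a k n u w m v I J t s : CH a k n u w m v I J -> (t < s)%nat -> (s < m)%nat ->
  v t (I t) < v s (I s).
Proof.
  intros H H1 H2. pose proof H as H'. dCH H'. induction s.
  - lia.
  - destruct (Nat.eq_dec t s). subst. apply Hinc; lia.
    specialize (IHs ltac:(lia) ltac:(lia)). specialize (Hinc s ltac:(lia)). lia.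
Qed.

Lemma ch_K2a a k n u w m v I J t s : CH a k n u w m v I J -> (t < s)%nat -> (s <= m)%nat ->
  v s (J t) = v t (I t).
Proof.
  intros H H1 H2. pose proof H as H'. dCH H'. induction s.
  - lia.
  - destruct (Nat.eq_dec t s).
    + subst. destruct (Hst s ltac:(lia)) as (A & B & C & D). rewrite B, vt_j. auto.
    + specialize (IHs ltac:(lia) ltac:(lia)).
      destruct (Hst s ltac:(lia)) as (A & B & C & D).
      destruct (Hst t ltac:(lia)) as (A' & B' & C' & D').
      assert (J s <> J t).
      { intros E. rewrite E, IHs in C. pose proof (ch_X_incr a k n u w m v I J t s H ltac:(lia) ltac:(lia)). lia. }
      rewrite B, vt_o; auto; lia.
Qed.

Lemma ch_K2b a k n u w m v I J t s : CH a k n u w m v I J -> (s <= t)%nat -> (t < m)%nat ->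
  v s (J t) = u (J t).
Proof.
  intros H H1 H2. pose proof H as H'. dCH H'. induction s.
  - rewrite Hv0. auto.
  - specialize (IHs ltac:(lia)).
    destruct (Hst s ltac:(lia)) as (A & B & C & D).
    destruct (Hst t ltac:(lia)) as (A' & B' & C' & D').
    assert (J s <> J t).
    { intros E. pose proof (ch_K2a a k n u w m v I J s t H ltac:(lia) ltac:(lia)) as E2.
      rewrite E in E2. pose proof (ch_X_incr a k n u w m v I J s t H ltac:(lia) ltac:(lia)). lia. }
    rewrite B, vt_o; auto; lia.
Qed.

Lemma ch_XY a k n u w m v I J t : CH a k n u w m v I J -> (t < m)%nat ->
  v t (I t) = w (J t) /\ v t (J t) = u (J t).
Proof.
  intros H Ht. pose proof H as H'. dCH H'. split.
  - rewrite <- (ch_K2a a k n u w m v I J t m H); auto. rewrite Hvm; auto.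
  - apply (ch_K2b a k n u w m v I J t t H); auto.
Qed.

Lemma ch_Jrange a k n u w m v I J t : CH a k n u w m v I J -> (t < m)%nat -> k < J t <= n.
Proof.
  intros H Ht. pose proof H as H'. dCH H'. destruct (Hst t Ht) as (A & B & C & D).
  destruct (ch_XY a k n u w m v I J t H Ht) as [E1 E2]. split; [lia|].
  destruct (Z_le_gt_dec (J t) n); auto. exfalso.
  destruct Hu as (_ & _ & Fu). destruct Hw as (_ & _ & Fw).
  rewrite Fw in E1 by lia. rewrite Fu in E2 by lia. lia.
Qed.

Lemma ch_Irange a k n u w m v I J t : CH a k n u w m v I J -> (t < m)%nat -> a <= I t <= k.
Proof.
  intros H Ht. pose proof H as H'. dCH H'. destruct (Hst t Ht) as (A & B & C & D).
  split; [|lia]. destruct (Z_le_gt_dec a (I t)); auto. exfalso.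
  destruct Hu as (_ & _ & Fu). destruct Hw as (_ & _ & Fw).
  pose proof (ch_left_mono a k n u w m v I J O t (I t) H ltac:(lia) ltac:(lia) ltac:(lia)) as M1.
  pose proof (ch_left_mono a k n u w m v I J (S t) m (I t) H ltac:(lia) ltac:(lia) ltac:(lia)) as M2.
  rewrite Hv0, Fu in M1 by lia. rewrite Hvm, Fw in M2 by lia.
  rewrite B, vt_i in M2. lia.
Qed.

Lemma ch_Jdec a k n u w m v I J t s : CH a k n u w m v I J -> (t < s)%nat -> (s < m)%nat -> J s < J t.
Proof.
  intros H H1 H2. pose proof H as H'. dCH H'.
  pose proof (ch_X_incr a k n u w m v I J t s H H1 H2) as X.
  destruct (ch_XY a k n u w m v I J t H ltac:(lia)) as [E1 _].
  destruct (ch_XY a k n u w m v I J s H ltac:(lia)) as [E2 _].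
  pose proof (ch_Jrange a k n u w m v I J t H ltac:(lia)).
  pose proof (ch_Jrange a k n u w m v I J s H ltac:(lia)).
  destruct (Z.lt_total (J s) (J t)) as [L|[L|L]]; auto; exfalso.
  - rewrite L in E2. lia.
  - specialize (Dw (J t) (J s) ltac:(lia)). lia.
Qed.

Lemma ch_Yinc a k n u w m v I J t s : CH a k n u w m v I J -> (t < s)%nat -> (s < m)%nat ->
  v t (J t) < v s (J s).
Proof.
  intros H H1 H2. pose proof H as H'. dCH H'.
  pose proof (ch_Jdec a k n u w m v I J t s H H1 H2).
  destruct (ch_XY a k n u w m v I J t H ltac:(lia)) as [_ E1].
  destruct (ch_XY a k n u w m v I J s H ltac:(lia)) as [_ E2].
  pose proof (ch_Jrange a k n u w m v I J t H ltac:(lia)).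
  pose proof (ch_Jrange a k n u w m v I J s H ltac:(lia)).
  rewrite E1, E2. apply Du. lia.
Qed.

Lemma ch_K5 a k n u w m v I J t : CH a k n u w m v I J -> (S t < m)%nat ->
  v t (J t) <= v (S t) (I (S t)).
Proof.
  intros H Ht. pose proof H as H'. dCH H'.
  destruct (Hst t ltac:(lia)) as (A & B & C & D).
  destruct (Hst (S t) ltac:(lia)) as (A' & B' & C' & D').
  destruct (Z_le_gt_dec (v t (J t)) (v (S t) (I (S t)))); auto. exfalso.
  pose proof (Hinc t ltac:(lia)) as Xi.
  destruct (Z.eq_dec (I (S t)) (I t)) as [E|E].
  - rewrite E, B, vt_i in g. lia.
  - assert (v (S t) (I (S t)) = v t (I (S t))) as E2.
    { rewrite B, vt_o; auto. lia. }
    assert (I (S t) < I t).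
    { destruct (Z_lt_le_dec (I (S t)) (I t)); auto. exfalso. apply (D (I (S t))); lia. }
    apply (D' (I t)). lia.
    pose proof (ch_Yinc a k n u w m v I J t (S t) H ltac:(lia) ltac:(lia)) as Yi.
    assert (v (S t) (I t) = v t (J t)) by (rewrite B, vt_i; auto).
    lia.
Qed.

Lemma ch_YX a k n u w m v I J t s : CH a k n u w m v I J -> (t < s)%nat -> (s < m)%nat ->
  v t (J t) <= v s (I s).
Proof.
  intros H H1 H2. pose proof (ch_K5 a k n u w m v I J t H ltac:(lia)).
  destruct (Nat.eq_dec s (S t)). subst; auto.
  pose proof (ch_X_incr a k n u w m v I J (S t) s H ltac:(lia) H2). lia.
Qed.

Definition Pcond (a k : Z) (u w : Z -> Z) : Prop :=
  (forall l, a <= l <= k -> u l <= w l) /\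
  (forall l l', a <= l <= k -> a <= l' <= k -> l <> l' -> u l < w l -> u l' < w l' ->
      w l < u l' \/ w l' < u l) /\
  (forall l l'', a <= l <= k -> a <= l'' <= k -> u l < u l'' < w l -> u l'' = w l'' -> l'' < l).

Lemma ch_untouched a k n u w m v I J l : CH a k n u w m v I J -> l <= k -> u l = w l ->
  forall t, (t <= m)%nat -> v t l = u l.
Proof.
  intros H Hl E t Ht. pose proof H as H'. dCH H'.
  pose proof (ch_left_mono a k n u w m v I J O t l H ltac:(lia) Ht Hl).
  pose proof (ch_left_mono a k n u w m v I J t m l H Ht ltac:(lia) Hl).
  rewrite Hv0 in *. rewrite Hvm in *. lia.
Qed.

Lemma ch_vS_other a k n u w m v I J t x : CH a k n u w m v I J -> (t < m)%nat -> x <= k -> x <> I t ->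
  v (S t) x = v t x.
Proof.
  intros H Ht Hx Hne. pose proof H as H'. dCH H'. destruct (Hst t Ht) as (A & B & C & D).
  rewrite B, vt_o; auto. lia.
Qed.

Lemma ch_vS_I a k n u w m v I J t : CH a k n u w m v I J -> (t < m)%nat ->
  v (S t) (I t) = v t (J t).
Proof.
  intros H Ht. pose proof H as H'. dCH H'. destruct (Hst t Ht) as (A & B & C & D).
  rewrite B, vt_i; auto.
Qed.

Lemma ch_Pc a k n u w m v I J : CH a k n u w m v I J ->
  forall t, (t <= m)%nat -> forall l l'', l <= k -> l'' <= k -> u l < u l'' < v t l -> u l'' = w l'' -> l'' < l.
Proof.
  intros H t. pose proof H as H'. dCH H'. induction t; intros Ht l l'' Hl Hl'' Hlt Hun.
  - rewrite Hv0 in Hlt. lia.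
  - specialize (IHt ltac:(lia)).
    destruct (Z.eq_dec l (I t)) as [E|E].
    + subst l. rewrite (ch_vS_I a k n u w m v I J t H ltac:(lia)) in Hlt.
      destruct (Z_lt_le_dec (u l'') (v t (I t))).
      * apply (IHt (I t) l''); auto; lia.
      * pose proof (ch_untouched a k n u w m v I J l'' H Hl'' Hun t ltac:(lia)) as Ut.
        destruct (Z.eq_dec (u l'') (v t (I t))) as [E2|E2].
        -- rewrite <- Ut in E2. apply (Hinj t ltac:(lia)) in E2. subst l''. lia.
        -- destruct (Hst t ltac:(lia)) as (A & B & C & D).
           destruct (Z_lt_le_dec l'' (I t)) as [L|L]; auto.
           destruct (Z.eq_dec l'' (I t)). { subst l''. lia. }
           exfalso. apply (D l''). lia. rewrite Ut. lia.
    + rewrite (ch_vS_other a k n u w m v I J t l H ltac:(lia) Hl E) in Hlt.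
      apply (IHt l l''); auto.
Qed.

Lemma ch_last a k n u w m v I J : CH a k n u w m v I J ->
  forall t, (t <= m)%nat -> forall l, l <= k -> u l < v t l -> exists s, (s < t)%nat /\ v t l = v s (J s).
Proof.
  intros H t. pose proof H as H'. dCH H'. induction t; intros Ht l Hl Hlt.
  - rewrite Hv0 in Hlt. lia.
  - destruct (Z.eq_dec l (I t)) as [E|E].
    + subst l. exists t. split; [lia|]. apply (ch_vS_I a k n u w m v I J t H). lia.
    + rewrite (ch_vS_other a k n u w m v I J t l H ltac:(lia) Hl E) in *.
      destruct (IHt ltac:(lia) l Hl Hlt) as [s [Hs Es]]. exists s. split; auto.
Qed.

Lemma ch_other_below a k n u w m v I J t l' : CH a k n u w m v I J -> (t < m)%nat -> l' <= k -> l' <> I t ->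
  u l' < v t l' -> v t l' < v t (I t).
Proof.
  intros H Ht Hl Hne Hlt. pose proof H as H'. dCH H'.
  destruct (ch_last a k n u w m v I J H t ltac:(lia) l' Hl Hlt) as [s [Hs Es]].
  pose proof (ch_YX a k n u w m v I J s t H Hs Ht).
  assert (v t l' <> v t (I t)) by (intros E; apply (Hinj t ltac:(lia)) in E; congruence).
  lia.
Qed.

Lemma ch_Qb a k n u w m v I J : CH a k n u w m v I J ->
  forall t, (t <= m)%nat -> forall l l', l <= k -> l' <= k -> l <> l' -> u l < v t l -> u l' < v t l' ->
  v t l < u l' \/ v t l' < u l.
Proof.
  intros H t. pose proof H as H'. dCH H'. induction t; intros Ht l l' Hl Hl' Hne H1 H2.
  - rewrite Hv0 in *. lia.
  - specialize (IHt ltac:(lia)).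
    assert (Key : forall x y, x <= k -> y <= k -> x = I t -> y <> x -> u y < v (S t) y -> v (S t) y < u x).
    { intros x y Hx Hy Ex Hyx Hy2. subst x.
      rewrite (ch_vS_other a k n u w m v I J t y H ltac:(lia) Hy Hyx) in *.
      pose proof (ch_other_below a k n u w m v I J t y H ltac:(lia) Hy Hyx Hy2).
      pose proof (ch_left_mono a k n u w m v I J O t (I t) H ltac:(lia) ltac:(lia) Hx) as M.
      rewrite Hv0 in M.
      destruct (Z.eq_dec (u (I t)) (v t (I t))) as [E|E]. lia.
      destruct (IHt (I t) y Hx Hy ltac:(auto) ltac:(lia) Hy2); lia. }
    destruct (Z.eq_dec l (I t)) as [E|E].
    + right. apply Key; auto.
    + destruct (Z.eq_dec l' (I t)) as [E'|E'].
      * left. apply Key; auto.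
      * rewrite (ch_vS_other a k n u w m v I J t l H ltac:(lia) Hl E) in *.
        rewrite (ch_vS_other a k n u w m v I J t l' H ltac:(lia) Hl' E') in *.
        apply IHt; auto.
Qed.

Lemma ch_P a k n u w m v I J : CH a k n u w m v I J -> Pcond a k u w.
Proof.
  intros H. pose proof H as H'. dCH H'. split; [|split].
  - intros l Hl. pose proof (ch_left_mono a k n u w m v I J O m l H ltac:(lia) ltac:(lia) ltac:(lia)).
    rewrite Hv0, Hvm in *. auto.
  - intros l l' Hl Hl' Hne H1 H2. pose proof (ch_Qb a k n u w m v I J H m ltac:(lia) l l' ltac:(lia) ltac:(lia) Hne).
    rewrite Hvm in *. auto.
  - intros l l'' Hl Hl'' H1 H2. apply (ch_Pc a k n u w m v I J H m ltac:(lia) l l''); try lia; auto.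
    rewrite Hvm; lia.
Qed.

Lemma ch_blank1 a k n u w m v I J r : CH a k n u w m v I J -> k < r <= n -> u r = w r ->
  forall l, l <= k -> ~ (u l < u r < w l).
Proof.
  intros H Hr Eur l Hl. pose proof H as H'. dCH H'.
  assert (forall t, (t <= m)%nat -> ~ (u l < u r < v t l)).
  { induction t; intros Ht.
    - rewrite Hv0. lia.
    - specialize (IHt ltac:(lia)).
      destruct (Z.eq_dec l (I t)) as [E|E].
      + subst l. rewrite (ch_vS_I a k n u w m v I J t H ltac:(lia)).
        destruct (ch_XY a k n u w m v I J t H ltac:(lia)) as [X Y].
        destruct (Hst t ltac:(lia)) as (A & B & C & D).
        pose proof (ch_Jrange a k n u w m v I J t H ltac:(lia)) as JR.
        intros Hc. apply IHt. split; [lia|].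
        destruct (Z_lt_le_dec (u r) (v t (I t))) as [L|L]; auto. exfalso.
        destruct (Z.eq_dec (J t) r) as [EJ|EJ].
        * rewrite EJ in *. lia.
        * destruct (Z_lt_le_dec (J t) r) as [L2|L2].
          -- pose proof (Dw (J t) r ltac:(lia)). destruct (Z.eq_dec (u r) (v t (I t))); lia.
          -- pose proof (Du r (J t) ltac:(lia)). lia.
      + rewrite (ch_vS_other a k n u w m v I J t l H ltac:(lia) Hl E). auto. }
  rewrite <- Hvm. apply H0. lia.
Qed.

Lemma ch_blank2 a k n u w m v I J r : CH a k n u w m v I J -> k < r <= n -> u r <> w r ->
  exists l, a <= l <= k /\ u l < u r <= w l.
Proof.
  intros H Hr Ne. pose proof H as H'. dCH H'.
  destruct (classic (exists t, (t < m)%nat /\ J t = r)) as [[t [Ht Et]]|Hn].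
  - exists (I t). pose proof (ch_Irange a k n u w m v I J t H Ht). split; auto.
    destruct (ch_XY a k n u w m v I J t H Ht) as [X Y].
    destruct (Hst t Ht) as (A & B & C & D).
    pose proof (ch_left_mono a k n u w m v I J O t (I t) H ltac:(lia) ltac:(lia) ltac:(lia)) as M1.
    pose proof (ch_left_mono a k n u w m v I J (S t) m (I t) H ltac:(lia) ltac:(lia) ltac:(lia)) as M2.
    rewrite (ch_vS_I a k n u w m v I J t H Ht) in M2.
    rewrite Hv0 in M1. rewrite Hvm in M2. subst r. lia.
  - exfalso. apply Ne.
    assert (forall t, (t <= m)%nat -> v t r = u r).
    { induction t; intros Ht. rewrite Hv0; auto.
      destruct (Hst t ltac:(lia)) as (A & B & C & D).
      rewrite B, vt_o. apply IHt; lia. lia. intros E. apply Hn. exists t. split; [lia|auto]. }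
    rewrite <- Hvm. symmetry. apply H0. lia.
Qed.

Lemma list_min (P : Z -> bool) (f : Z -> Z) (L : list Z) :
  (exists x, In x L /\ P x = true) ->
  exists x, In x L /\ P x = true /\ forall y, In y L -> P y = true -> f x <= f y.
Proof.
  induction L as [|a L IH]; intros [x [Hx Px]]; [contradiction|].
  destruct (classic (exists x, In x L /\ P x = true)) as [Hex|Hno].
  - destruct (IH Hex) as [z [Hz [Pz Mz]]].
    destruct (P a) eqn:Pa.
    + destruct (Z_le_gt_dec (f a) (f z)).
      * exists a. split; [left; auto|]. split; auto. intros y [<-|Hy] Py; [lia|]. specialize (Mz y Hy Py). lia.
      * exists z. split; [right; auto|]. split; auto. intros y [<-|Hy] Py; [lia|]. auto.
    + exists z. split; [right; auto|]. split; auto. intros y [<-|Hy] Py; [congruence|]. auto.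
  - destruct Hx as [<-|Hx]; [|exfalso; apply Hno; eauto].
    exists a. split; [left; auto|]. split; auto. intros y [<-|Hy] Py; [lia|]. exfalso; apply Hno; eauto.
Qed.

Lemma in_S_maps a n u : in_S a n u -> forall x, a <= x <= n -> a <= u x <= n.
Proof. intros [Hi [_ Hf]]. apply maps_into; auto. Qed.

Lemma zsum_lt f g l x : (forall y, In y l -> f y <= g y) -> In x l -> f x < g x -> zsum f l < zsum g l.
Proof.
  induction l as [|a l IH]; simpl; intros H Hx Hlt; [contradiction|].
  destruct Hx as [<-|Hx].
  - pose proof (zsum_le f g l (fun y Hy => H y (or_intror Hy))). lia.
  - specialize (IH (fun y Hy => H y (or_intror Hy)) Hx Hlt). specialize (H a (or_introl eq_refl)). lia.
Qed.

Definition chainP k (u w : Z -> Z) m (v : nat -> Z -> Z) (I J : nat -> Z) : Prop :=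
  (forall x, v O x = u x) /\ (forall x, v m x = w x) /\
  (forall t, (t < m)%nat -> kcover k (v t) (I t) (J t) (v (S t))) /\
  (forall t, (S t < m)%nat -> v t (I t) < v (S t) (I (S t))).

Lemma base_eq a k n u w : a <= k <= n -> in_S a n u -> in_S a n w -> decr_on k n u -> decr_on k n w ->
  (forall l, a <= l <= k -> u l = w l) -> forall x, u x = w x.
Proof.
  intros Hk Hu Hw Du Dw HL.
  assert (Hr : forall N : nat, forall r, k < r <= n -> (Z.to_nat (r - k) <= N)%nat -> u r = w r).
  { induction N; intros r Hr HN; [lia|].
    destruct (Hw) as [Wi [Ws Wf]]. destruct Hu as [Ui [Us Uf]].
    assert (Hlow : forall r', k < r' < r -> u r' = w r') by (intros r' Hr'; apply IHN; lia).
    destruct (Ws (u r)) as [r1 E1].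
    destruct (Us (w r)) as [r2 E2].
    pose proof (in_S_maps a n u (conj Ui (conj Us Uf)) r ltac:(lia)) as Mu.
    pose proof (in_S_maps a n w (conj Wi (conj Ws Wf)) r ltac:(lia)) as Mw.
    assert (R1 : r <= r1 <= n).
    { destruct (Z_le_gt_dec a r1); [|rewrite Wf in E1 by lia; lia].
      destruct (Z_le_gt_dec r1 n); [|rewrite Wf in E1 by lia; lia].
      destruct (Z_le_gt_dec r1 k).
      - rewrite <- HL in E1 by lia. apply Ui in E1. lia.
      - destruct (Z_lt_le_dec r1 r); [|lia]. rewrite <- Hlow in E1 by lia. apply Ui in E1. lia. }
    assert (R2 : r <= r2 <= n).
    { destruct (Z_le_gt_dec a r2); [|rewrite Uf in E2 by lia; lia].
      destruct (Z_le_gt_dec r2 n); [|rewrite Uf in E2 by lia; lia].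
      destruct (Z_le_gt_dec r2 k).
      - rewrite HL in E2 by lia. apply Wi in E2. lia.
      - destruct (Z_lt_le_dec r2 r); [|lia]. rewrite Hlow in E2 by lia. apply Wi in E2. lia. }
    destruct (Z.eq_dec r1 r). subst r1. auto.
    destruct (Z.eq_dec r2 r). subst r2. auto.
    pose proof (Dw r r1 ltac:(lia)). pose proof (Du r r2 ltac:(lia)). lia. }
  intros x. destruct (Z_le_gt_dec a x); [|destruct Hu as [_ [_ Uf]]; destruct Hw as [_ [_ Wf]]; rewrite Uf, Wf; lia].
  destruct (Z_le_gt_dec x n); [|destruct Hu as [_ [_ Uf]]; destruct Hw as [_ [_ Wf]]; rewrite Uf, Wf; lia].
  destruct (Z_le_gt_dec x k). apply HL; lia.
  apply (Hr (Z.to_nat (x - k))); lia.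
Qed.

Definition notin_u (u : Z -> Z) a k c := negb (existsb (fun l' => u l' =? c) (zrange a k)).

Lemma notin_u_spec u a k c : notin_u u a k c = true <-> forall l', a <= l' <= k -> u l' <> c.
Proof.
  unfold notin_u. rewrite negb_true_iff. split.
  - intros H l' Hl' E. assert (existsb (fun l' => u l' =? c) (zrange a k) = true).
    { apply existsb_exists. exists l'. split. apply in_zrange; lia. apply Z.eqb_eq; auto. } congruence.
  - intros H. destruct (existsb (fun l' => u l' =? c) (zrange a k)) eqn:E; auto.
    apply existsb_exists in E. destruct E as [l' [Hl' E]]. apply in_zrange in Hl'. apply Z.eqb_eq in E.
    exfalso. apply (H l'); auto.
Qed.

Lemma step_exists a k n u w : a <= k <= n -> in_S a n u -> in_S a n w -> decr_on k n u -> decr_on k n w ->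
  Pcond a k u w -> (exists l, a <= l <= k /\ u l < w l) ->
  exists l j, a <= l <= k /\ k < j <= n /\ u l < w l /\
   kcover k u l j (vt u l j) /\ in_S a n (vt u l j) /\ decr_on k n (vt u l j) /\ Pcond a k (vt u l j) w /\
   (forall l', a <= l' <= k -> vt u l j l' < w l' -> u l < vt u l j l') /\
   zsum (fun x => w x - vt u l j x) (zrange a k) < zsum (fun x => w x - u x) (zrange a k).
Proof.
  intros Hk Hu Hw Du Dw HP Hex.
  pose proof Hu as Hu'. pose proof Hw as Hw'.
  destruct Hu' as [Ui [Us Uf]]. destruct Hw' as [Wi [Ws Wf]].
  destruct HP as [Pa [Pb Pc]].
  destruct (list_min (fun l => u l <? w l) u (zrange a k)) as [l [Hl [Pl Ml]]].
  { destruct Hex as [l [Hl1 Hl2]]. exists l. split. apply in_zrange; lia. apply Z.ltb_lt; auto. }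
  apply in_zrange in Hl. apply Z.ltb_lt in Pl.
  assert (Min : forall l', a <= l' <= k -> u l' < w l' -> u l <= u l').
  { intros l' H1 H2. apply Ml. apply in_zrange; auto. apply Z.ltb_lt; auto. }
  clear Ml.
  pose proof (in_S_maps a n u Hu l ltac:(lia)) as Mul.
  pose proof (in_S_maps a n w Hw l ltac:(lia)) as Mwl.
  destruct (list_min (notin_u u a k) (fun c => c) (zrange (u l + 1) (w l))) as [y [Hy [Py My]]].
  { exists (w l). split. apply in_zrange; lia. apply notin_u_spec. intros l' Hl' E.
    destruct (Z.eq_dec l' l). subst l'. lia.
    pose proof (Pa l' Hl').
    destruct (Z.eq_dec (u l') (w l')) as [E2|E2].
    - rewrite E in E2. apply Wi in E2. lia.
    - destruct (Pb l l' ltac:(lia) Hl' ltac:(auto) Pl ltac:(lia)); lia. }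
  apply in_zrange in Hy. rewrite notin_u_spec in Py.
  assert (Btw : forall c, u l < c < y -> exists l'', a <= l'' <= k /\ u l'' = c).
  { intros c Hc. destruct (classic (exists l'', a <= l'' <= k /\ u l'' = c)) as [H|H]; auto.
    exfalso. assert (notin_u u a k c = true).
    { apply notin_u_spec. intros l' Hl' E. apply H. eauto. }
    specialize (My c ltac:(apply in_zrange; lia) H0). lia. }
  clear My.
  destruct (Us y) as [j Ej].
  assert (Hj : k < j <= n).
  { destruct (Z_le_gt_dec a j); [|rewrite Uf in Ej by lia; lia].
    destruct (Z_le_gt_dec j n); [|rewrite Uf in Ej by lia; lia].
    destruct (Z_le_gt_dec j k); [|lia]. exfalso. apply (Py j); auto; lia. }
  set (u' := vt u l j).
  assert (U'l : u' l = y) by (unfold u'; rewrite vt_i; auto).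
  assert (U'j : u' j = u l) by (unfold u'; rewrite vt_j; auto).
  assert (U'o : forall x, x <> l -> x <> j -> u' x = u x) by (intros; unfold u'; rewrite vt_o; auto).
  assert (NoInt : forall p, l < p < j -> ~ (u l < u p < u j)).
  { intros p Hp Hv. rewrite Ej in Hv. destruct (Btw (u p) Hv) as [l'' [Hl'' E]].
    apply Ui in E. subst l''.
    pose proof (Pa p Hl'').
    destruct (Z.eq_dec (u p) (w p)) as [E2|E2].
    - pose proof (Pc l p ltac:(lia) Hl'' ltac:(lia) E2). lia.
    - destruct (Pb l p ltac:(lia) Hl'' ltac:(lia) Pl ltac:(lia)); lia. }
  exists l, j. fold u'. split; [lia|]. split; [lia|]. split; [lia|].
  split; [apply (kcover_make k u l j a n); auto; lia|].
  split.
  { split; [apply injZ_vt; auto|]. split.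
    - intros y0. destruct (Us y0) as [x Ex]. exists (tau l j x). unfold u', vt. rewrite tau_invol. auto.
    - apply vt_fix; auto; lia. }
  split.
  { intros x y' [H1 H2].
    destruct (Z.eq_dec x j) as [Ex|Ex].
    - subst x. rewrite U'j, U'o by lia.
      pose proof (Du j y' ltac:(lia)). rewrite Ej in H.
      destruct (Z_lt_le_dec (u y') (u l)); auto.
      destruct (Z.eq_dec (u y') (u l)) as [E3|E3]. apply Ui in E3. lia.
      destruct (Btw (u y') ltac:(lia)) as [l'' [Hl'' E]]. apply Ui in E. lia.
    - destruct (Z.eq_dec y' j) as [Ey|Ey].
      + subst y'. rewrite U'j, U'o by lia. pose proof (Du x j ltac:(lia)). lia.
      + rewrite !U'o by lia. apply Du; lia. }
  assert (U'L : forall l', a <= l' <= k -> l' <> l -> u' l' = u l') by (intros; apply U'o; lia).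
  split.
  { split; [|split].
    - intros l' Hl'. destruct (Z.eq_dec l' l). subst l'. lia. rewrite U'L; auto.
    - intros p q Hp Hq Hpq H1 H2.
      destruct (Z.eq_dec p l) as [Ep|Ep].
      + subst p. rewrite U'l in *. rewrite (U'L q) in * by lia. destruct (Pb l q Hp Hq Hpq Pl H2); lia.
      + destruct (Z.eq_dec q l) as [Eq|Eq].
        * subst q. rewrite U'l in *. rewrite (U'L p) in * by lia. destruct (Pb p l Hp Hq Hpq H1 Pl); lia.
        * rewrite (U'L p), (U'L q) in * by lia. apply Pb; auto.
    - intros p q Hp Hq H1 H2.
      destruct (Z.eq_dec q l) as [Eq|Eq].
      + subst q. rewrite U'l in *. destruct (Z.eq_dec p l) as [Ep|Ep]. subst p. lia.
        rewrite (U'L p) in H1 by lia.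
        destruct (Pb p l Hp Hq Ep ltac:(lia) Pl); lia.
      + rewrite (U'L q) in * by lia. destruct (Z.eq_dec p l) as [Ep|Ep].
        * subst p. rewrite U'l in H1. apply (Pc l q); auto. lia.
        * rewrite (U'L p) in H1 by lia. apply (Pc p q); auto. }
  split.
  { intros l' Hl' H. destruct (Z.eq_dec l' l). subst l'. lia.
    rewrite U'L in * by lia. pose proof (Min l' Hl' H).
    assert (u l <> u l') by (intros E; apply Ui in E; lia). lia. }
  apply (zsum_lt _ _ _ l).
  - intros x Hx. apply in_zrange in Hx. destruct (Z.eq_dec x l). subst x. lia. rewrite U'L; auto. lia.
  - apply in_zrange; lia.
  - lia.
Qed.

Lemma measure_nonneg a k u w : Pcond a k u w -> 0 <= zsum (fun x => w x - u x) (zrange a k).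
Proof.
  intros [Pa _]. rewrite <- (zsum_0 (zrange a k)). apply zsum_le.
  intros x Hx. apply in_zrange in Hx. specialize (Pa x Hx). lia.
Qed.

Lemma build_chain a k n w : a <= k <= n -> in_S a n w -> decr_on k n w ->
  forall N : nat, forall u b, zsum (fun x => w x - u x) (zrange a k) <= Z.of_nat N ->
  in_S a n u -> decr_on k n u -> Pcond a k u w ->
  (forall l, a <= l <= k -> u l < w l -> b < u l) ->
  exists m v I J, chainP k u w m v I J /\ ((0 < m)%nat -> b < v O (I O)).
Proof.
  intros Hk Hw Dw N. induction N as [|N IH]; intros u b HN Hu Du HP Hb;
  (destruct (classic (exists l, a <= l <= k /\ u l < w l)) as [Hex|Hno];
   [|exists O, (fun _ => u), (fun _ => 0), (fun _ => 0);
     split; [|lia];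
     split; [reflexivity|]; split; [|split; intros; lia];
     apply (base_eq a k n u w); auto;
     intros l Hl; destruct HP as [Pa _]; specialize (Pa l Hl);
     destruct (Z.eq_dec (u l) (w l)); auto; exfalso; apply Hno; exists l; split; auto; lia]).
  - destruct (step_exists a k n u w Hk Hu Hw Du Dw HP Hex) as [l [j [Hl [Hj [Hlw [Kc [Hu' [Du' [HP' [Hb' Hm]]]]]]]]]].
    pose proof (measure_nonneg a k _ _ HP'). simpl in HN. lia.
  - destruct (step_exists a k n u w Hk Hu Hw Du Dw HP Hex) as [l [j [Hl [Hj [Hlw [Kc [Hu' [Du' [HP' [Hb' Hm]]]]]]]]]].
    destruct (IH (vt u l j) (u l) ltac:(lia) Hu' Du' HP' Hb') as [m [v [I [J [[C0 [C1 [C2 C3]]] Cf]]]]].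
    exists (S m), (fun t => match t with O => u | S t' => v t' end),
      (fun t => match t with O => l | S t' => I t' end),
      (fun t => match t with O => j | S t' => J t' end).
    split; [|intros _; apply Hb; auto].
    split; [reflexivity|]. split; [exact C1|]. split.
    + intros t Ht. destruct t.
      * assert (v O = vt u l j) as E by (apply functional_extensionality; auto). rewrite E. exact Kc.
      * apply C2. lia.
    + intros t Ht. destruct t.
      * simpl. apply Cf. lia.
      * apply C3. lia.
Qed.

Lemma P_kchain a k n u w : a <= k <= n -> in_S a n u -> in_S a n w -> decr_on k n u -> decr_on k n w ->
  Pcond a k u w -> kchain k u w.
Proof.
  intros Hk Hu Hw Du Dw HP.
  pose proof (measure_nonneg a k u w HP).
  destruct (build_chain a k n w Hk Hw Dw (Z.to_nat (zsum (fun x => w x - u x) (zrange a k))) u (a - 1)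
     ltac:(lia) Hu Du HP) as [m [v [I [J [C _]]]]].
  { intros l Hl _. pose proof (in_S_maps a n u Hu l ltac:(lia)). lia. }
  exists m, v, I, J. exact C.
Qed.

Definition HYP a k n (gN gS : Z -> option Z) (u w : Z -> Z) : Prop :=
  a <= k <= n /\ values_exactly a k n gN /\ values_exactly a k n gS /\
  in_S a n w /\ (forall l, a <= l <= k -> gN (w l) = Some l) /\ decr_on k n w /\
  in_S a n u /\ (forall l, a <= l <= k -> gS (u l) = Some l) /\ decr_on k n u.

Ltac dH H := destruct H as (Hk & VN & VS & Hw & HgN & Dw & Hu & HgS & Du).

Lemma gN_spec a k n gN gS u w c l : HYP a k n gN gS u w -> a <= c <= n ->
  (gN c = Some l <-> a <= l <= k /\ w l = c).
Proof.
  intros H Hc. dH H. split.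
  - intros E. destruct VN as [V1 [V2 V3]]. pose proof (V1 c l Hc E).
    split; auto. apply (V3 (w l) c l); auto. apply (in_S_maps a n w Hw); lia.
  - intros [Hl <-]. auto.
Qed.

Lemma gS_spec a k n gN gS u w c l : HYP a k n gN gS u w -> a <= c <= n ->
  (gS c = Some l <-> a <= l <= k /\ u l = c).
Proof.
  intros H Hc. dH H. split.
  - intros E. destruct VS as [V1 [V2 V3]]. pose proof (V1 c l Hc E).
    split; auto. apply (V3 (u l) c l); auto. apply (in_S_maps a n u Hu); lia.
  - intros [Hl <-]. auto.
Qed.

Definition topb (gN : Z -> option Z) c := match gN c with Some _ => true | None => false end.
Definition labo (g : Z -> option Z) c := match g c with Some l => l | None => 0 end.

Lemma topb_spec a k n gN gS u w c : HYP a k n gN gS u w -> a <= c <= n ->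
  (topb gN c = true <-> exists l, a <= l <= k /\ w l = c).
Proof.
  intros H Hc. unfold topb. split.
  - destruct (gN c) eqn:E; [|discriminate]. intros _. exists z. apply (gN_spec a k n gN gS u w c z H Hc); auto.
  - intros [l Hl]. rewrite (proj2 (gN_spec a k n gN gS u w c l H Hc) Hl). auto.
Qed.

Lemma botb_spec a k n gN gS u w c : HYP a k n gN gS u w -> a <= c <= n ->
  (topb gS c = true <-> exists l, a <= l <= k /\ u l = c).
Proof.
  intros H Hc. unfold topb. split.
  - destruct (gS c) eqn:E; [|discriminate]. intros _. exists z. apply (gS_spec a k n gN gS u w c z H Hc); auto.
  - intros [l Hl]. rewrite (proj2 (gS_spec a k n gN gS u w c l H Hc) Hl). auto.
Qed.

Definition rb a k (u w : Z -> Z) c := existsb (fun l => (u l <=? c) && (c <? w l)) (zrange a k).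

Lemma rb_spec a k u w c : rb a k u w c = true <-> exists l, a <= l <= k /\ u l <= c < w l.
Proof.
  unfold rb. rewrite existsb_exists. split.
  - intros [l [Hl E]]. apply in_zrange in Hl. rewrite andb_true_iff, Z.leb_le, Z.ltb_lt in E. eauto.
  - intros [l [Hl E]]. exists l. split. apply in_zrange; auto. rewrite andb_true_iff, Z.leb_le, Z.ltb_lt. lia.
Qed.

Definition tile_of (t b l : bool) : tile :=
  match t, b, l with
  | false, false, false => Blank
  | false, false, true => Hor
  | true, true, false => Vrt
  | false, true, false => RElb
  | true, false, true => JElb
  | true, true, true => Cross
  | true, false, false => Vrt
  | false, true, true => Cross
  end.

Definition top_t (t : tile) : bool := match t with Vrt | JElb | Cross => true | _ => false end.
Definition bot_t (t : tile) : bool := match t with Vrt | RElb | Cross => true | _ => false end.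

Lemma tile_of_triple t : tile_of (top_t t) (bot_t t) (uses_left t) = t.
Proof. destruct t; reflexivity. Qed.

Definition Dc a k (gN gS : Z -> option Z) (u w : Z -> Z) : tiling :=
  fun c => tile_of (topb gN c) (topb gS c) (rb a k u w (c - 1)).

Lemma overlap a k u w l1 l2 c : Pcond a k u w -> a <= l1 <= k -> a <= l2 <= k ->
  u l1 < w l1 -> u l2 < w l2 -> u l1 <= c <= w l1 -> u l2 <= c <= w l2 -> l1 = l2.
Proof.
  intros [_ [Pb _]] H1 H2 H3 H4 H5 H6. destruct (Z.eq_dec l1 l2); auto.
  destruct (Pb l1 l2 H1 H2 n H3 H4); lia.
Qed.

Lemma wu_same a k n gN gS u w l1 l2 : HYP a k n gN gS u w -> Pcond a k u w ->
  a <= l1 <= k -> a <= l2 <= k -> w l1 = u l2 -> l1 = l2.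
Proof.
  intros H HP H1 H2 E. pose proof H as H'. dH H'. destruct HP as [Pa [Pb Pc]].
  destruct (Z.eq_dec l1 l2) as [|Ne]; auto. exfalso.
  pose proof (Pa l1 H1). pose proof (Pa l2 H2).
  destruct (Z.eq_dec (u l1) (w l1)) as [E1|E1].
  - assert (u l1 = u l2) as E3 by congruence. destruct Hu as [Ui _]. apply Ui in E3. auto.
  - destruct (Z.eq_dec (u l2) (w l2)) as [E2|E2].
    + assert (w l1 = w l2) as E3 by congruence. destruct Hw as [Wi _]. apply Wi in E3. auto.
    + destruct (Pb l1 l2 H1 H2 Ne ltac:(lia) ltac:(lia)); lia.
Qed.

Lemma rb_lo a k n gN gS u w : HYP a k n gN gS u w -> rb a k u w (a - 1) = false.
Proof.
  intros H. destruct (rb a k u w (a-1)) eqn:E; auto. apply rb_spec in E. destruct E as [l [Hl E]].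
  dH H. pose proof (in_S_maps a n u Hu l ltac:(lia)). lia.
Qed.

Lemma rb_hi a k n gN gS u w : HYP a k n gN gS u w -> rb a k u w n = false.
Proof.
  intros H. destruct (rb a k u w n) eqn:E; auto. apply rb_spec in E. destruct E as [l [Hl E]].
  dH H. pose proof (in_S_maps a n w Hw l ltac:(lia)). lia.
Qed.

Lemma valid a k n gN gS u w c : HYP a k n gN gS u w -> Pcond a k u w -> a <= c <= n ->
  top_t (Dc a k gN gS u w c) = topb gN c /\ bot_t (Dc a k gN gS u w c) = topb gS c /\
  uses_left (Dc a k gN gS u w c) = rb a k u w (c - 1) /\ uses_right (Dc a k gN gS u w c) = rb a k u w c.
Proof.
  intros H HP Hc. pose proof H as H'. dH H'. pose proof HP as HP'. destruct HP' as [Pa [Pb Pc]].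
  destruct Hu as [Ui [Us Uf]]. destruct Hw as [Wi [Ws Wf]].
  unfold Dc.
  destruct (topb gN c) eqn:T; destruct (topb gS c) eqn:B.
  - apply (topb_spec a k n gN gS u w c H Hc) in T. destruct T as [l1 [Hl1 E1]].
    apply (botb_spec a k n gN gS u w c H Hc) in B. destruct B as [l2 [Hl2 E2]].
    assert (l1 = l2) by (apply (wu_same a k n gN gS u w); auto; lia). subst l2.
    assert (rb a k u w (c-1) = rb a k u w c) as ER.
    { apply eq_true_iff_eq. rewrite !rb_spec. split; intros [l' [Hl' E']]; exists l'; split; auto.
      - destruct (Z.eq_dec c (w l')); [|lia]. rewrite <- E1 in e. apply Wi in e. subst l'. lia.
      - destruct (Z.eq_dec c (u l')); [|lia]. rewrite <- E2 in e. apply Ui in e. subst l'. lia. }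
    rewrite <- ER. destruct (rb a k u w (c-1)); simpl; auto.
  - apply (topb_spec a k n gN gS u w c H Hc) in T. destruct T as [l1 [Hl1 E1]].
    assert (NB : forall l', a <= l' <= k -> u l' <> c).
    { intros l' Hl' E. assert (topb gS c = true) by (apply (botb_spec a k n gN gS u w c H Hc); eauto). congruence. }
    pose proof (Pa l1 Hl1). pose proof (NB l1 Hl1).
    assert (rb a k u w (c-1) = true) as R1 by (apply rb_spec; exists l1; split; auto; lia).
    assert (rb a k u w c = false) as R2.
    { destruct (rb a k u w c) eqn:E; auto. apply rb_spec in E. destruct E as [l' [Hl' E']].
      pose proof (NB l' Hl').
      assert (l' = l1) by (apply (overlap a k u w l' l1 c); auto; lia). subst l'. lia. }
    rewrite R1, R2. auto.
  - apply (botb_spec a k n gN gS u w c H Hc) in B. destruct B as [l1 [Hl1 E1]].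
    assert (NT : forall l', a <= l' <= k -> w l' <> c).
    { intros l' Hl' E. assert (topb gN c = true) by (apply (topb_spec a k n gN gS u w c H Hc); eauto). congruence. }
    pose proof (Pa l1 Hl1). pose proof (NT l1 Hl1).
    assert (rb a k u w c = true) as R1 by (apply rb_spec; exists l1; split; auto; lia).
    assert (rb a k u w (c-1) = false) as R2.
    { destruct (rb a k u w (c-1)) eqn:E; auto. apply rb_spec in E. destruct E as [l' [Hl' E']].
      pose proof (NT l' Hl').
      assert (l' = l1) by (apply (overlap a k u w l' l1 c); auto; lia). subst l'. lia. }
    rewrite R1, R2. auto.
  - assert (NB : forall l', a <= l' <= k -> u l' <> c).
    { intros l' Hl' E. assert (topb gS c = true) by (apply (botb_spec a k n gN gS u w c H Hc); eauto). congruence. }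
    assert (NT : forall l', a <= l' <= k -> w l' <> c).
    { intros l' Hl' E. assert (topb gN c = true) by (apply (topb_spec a k n gN gS u w c H Hc); eauto). congruence. }
    assert (rb a k u w (c-1) = rb a k u w c) as ER.
    { apply eq_true_iff_eq. rewrite !rb_spec. split; intros [l' [Hl' E']]; exists l'; split; auto.
      - pose proof (NT l' Hl'). lia.
      - pose proof (NB l' Hl'). lia. }
    rewrite <- ER. destruct (rb a k u w (c-1)); simpl; auto.
Qed.

Ltac crush_link :=
  repeat match goal with
  | H : (@eq edge _ _) /\ _ |- _ => destruct H
  | H : ((@eq edge _ _) /\ _) \/ _ |- _ => destruct H
  | H : False |- _ => contradiction
  | H : ETop _ = ETop _ |- _ => injection H as H
  | H : EBot _ = EBot _ |- _ => injection H as H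
  | H : EV _ = EV _ |- _ => injection H as H
  | H : ETop _ = EBot _ |- _ => discriminate H
  | H : ETop _ = EV _ |- _ => discriminate H
  | H : EBot _ = ETop _ |- _ => discriminate H
  | H : EBot _ = EV _ |- _ => discriminate H
  | H : EV _ = ETop _ |- _ => discriminate H
  | H : EV _ = EBot _ |- _ => discriminate H
  end.

Lemma used_top a n D c : used a n D (ETop c) <-> a <= c <= n /\ top_t (D c) = true.
Proof.
  split.
  - intros [e' [[c0 [Hc L]]|[c0 [Hc L]]]]; destruct (D c0) eqn:E; simpl in L; crush_link; subst;
      split; auto; rewrite E; reflexivity.
  - intros [Hc T]. destruct (D c) eqn:E; simpl in T; try discriminate.
    + exists (EBot c). left. exists c. split; auto. rewrite E. simpl. auto.
    + exists (EV (c-1)). left. exists c. split; auto. rewrite E. simpl. auto.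
    + exists (EBot c). left. exists c. split; auto. rewrite E. simpl. auto.
Qed.

Lemma used_bot a n D c : used a n D (EBot c) <-> a <= c <= n /\ bot_t (D c) = true.
Proof.
  split.
  - intros [e' [[c0 [Hc L]]|[c0 [Hc L]]]]; destruct (D c0) eqn:E; simpl in L; crush_link; subst;
      split; auto; rewrite E; reflexivity.
  - intros [Hc T]. destruct (D c) eqn:E; simpl in T; try discriminate.
    + exists (ETop c). right. exists c. split; auto. rewrite E. simpl. auto.
    + exists (EV c). left. exists c. split; auto. rewrite E. simpl. auto.
    + exists (ETop c). right. exists c. split; auto. rewrite E. simpl. auto.
Qed.

Lemma used_EV a n D c : used a n D (EV c) <->
  (a <= c <= n /\ uses_right (D c) = true) \/ (a <= c + 1 <= n /\ uses_left (D (c + 1)) = true).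
Proof.
  split.
  - intros [e' [[c0 [Hc L]]|[c0 [Hc L]]]]; destruct (D c0) eqn:E; simpl in L; crush_link; subst;
      first [ left; split; auto; rewrite E; reflexivity
            | right; replace (c0 - 1 + 1) with c0 by lia; split; [lia|]; rewrite E; reflexivity ].
  - intros [[Hc T]|[Hc T]].
    + destruct (D c) eqn:E; simpl in T; try discriminate.
      * exists (EV (c-1)). right. exists c. split; auto. rewrite E. simpl. auto.
      * exists (EBot c). right. exists c. split; auto. rewrite E. simpl. auto.
      * exists (EV (c-1)). right. exists c. split; auto. rewrite E. simpl. auto.
    + destruct (D (c+1)) eqn:E; simpl in T; try discriminate.
      * exists (EV (c+1)). left. exists (c+1). split; auto. rewrite E. simpl. replace (c+1-1) with c by lia. auto.
      * exists (ETop (c+1)). right. exists (c+1). split; auto. rewrite E. simpl. replace (c+1-1) with c by lia. auto.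
      * exists (EV (c+1)). left. exists (c+1). split; auto. rewrite E. simpl. replace (c+1-1) with c by lia. auto.
Qed.

Definition labEV a k (u w : Z -> Z) c :=
  match find (fun l => (u l <=? c) && (c <? w l)) (zrange a k) with Some l => l | None => 0 end.

Definition labD a k (gN gS : Z -> option Z) (u w : Z -> Z) (e : edge) : Z :=
  match e with ETop c => labo gN c | EBot c => labo gS c | EV c => labEV a k u w c end.

Lemma labEV_spec a k u w c l : Pcond a k u w -> a <= l <= k -> u l <= c < w l -> labEV a k u w c = l.
Proof.
  intros HP Hl Hc. unfold labEV.
  destruct (find (fun l => (u l <=? c) && (c <? w l)) (zrange a k)) eqn:E.
  - apply find_some in E. destruct E as [Hz E]. apply in_zrange in Hz.
    rewrite andb_true_iff, Z.leb_le, Z.ltb_lt in E.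
    apply (overlap a k u w z l c); auto; lia.
  - exfalso. eapply find_none in E. 2:{ apply in_zrange. exact Hl. }
    rewrite andb_false_iff, Z.leb_gt, Z.ltb_ge in E. lia.
Qed.

Lemma labo_spec g c l : g c = Some l -> labo g c = l.
Proof. unfold labo. intros ->. auto. Qed.

Lemma top_get a k n gN gS u w c : HYP a k n gN gS u w -> a <= c <= n -> topb gN c = true ->
  exists l, a <= l <= k /\ w l = c /\ labo gN c = l.
Proof.
  intros H Hc T. unfold topb in T. destruct (gN c) eqn:E; [|discriminate].
  exists z. apply (gN_spec a k n gN gS u w c z H Hc) in E as E'. destruct E'. split; auto. split; auto.
  apply labo_spec; auto.
Qed.

Lemma bot_get a k n gN gS u w c : HYP a k n gN gS u w -> a <= c <= n -> topb gS c = true ->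
  exists l, a <= l <= k /\ u l = c /\ labo gS c = l.
Proof.
  intros H Hc T. unfold topb in T. destruct (gS c) eqn:E; [|discriminate].
  exists z. apply (gS_spec a k n gN gS u w c z H Hc) in E as E'. destruct E'. split; auto. split; auto.
  apply labo_spec; auto.
Qed.

Lemma notop a k n gN gS u w c l : HYP a k n gN gS u w -> a <= c <= n -> topb gN c = false ->
  a <= l <= k -> w l <> c.
Proof.
  intros H Hc T Hl E. assert (topb gN c = true) by (apply (topb_spec a k n gN gS u w c H Hc); eauto). congruence.
Qed.

Lemma nobot a k n gN gS u w c l : HYP a k n gN gS u w -> a <= c <= n -> topb gS c = false ->
  a <= l <= k -> u l <> c.
Proof.
  intros H Hc T Hl E. assert (topb gS c = true) by (apply (botb_spec a k n gN gS u w c H Hc); eauto). congruence.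
Qed.

Ltac get_valid a k n gN gS u w c H HP Hc :=
  let V1 := fresh "V" in let V2 := fresh "V" in let V3 := fresh "V" in let V4 := fresh "V" in
  destruct (valid a k n gN gS u w c H HP Hc) as [V1 [V2 [V3 V4]]].

Lemma link_lab a k n gN gS u w e e' : HYP a k n gN gS u w -> Pcond a k u w ->
  link a n (Dc a k gN gS u w) e e' -> labD a k gN gS u w e = labD a k gN gS u w e'.
Proof.
  intros H HP [c [Hc L]]. pose proof HP as HP'. destruct HP' as [Pa [Pb Pc]].
  get_valid a k n gN gS u w c H HP Hc.
  destruct (Dc a k gN gS u w c) eqn:E; simpl in L, V, V0, V1, V2; crush_link; subst; simpl.
  -
    symmetry in V1, V2. apply rb_spec in V1, V2. destruct V1 as [l1 [Hl1 E1]]. destruct V2 as [l2 [Hl2 E2]].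
    rewrite (labEV_spec a k u w (c-1) l1), (labEV_spec a k u w c l2); auto.
    apply (overlap a k u w l1 l2 c); auto; lia.
  -
    destruct (top_get a k n gN gS u w c H Hc (eq_sym V)) as [l1 [Hl1 [E1 L1]]].
    destruct (bot_get a k n gN gS u w c H Hc (eq_sym V0)) as [l2 [Hl2 [E2 L2]]].
    rewrite L1, L2. apply (wu_same a k n gN gS u w); auto; lia.
  -
    destruct (bot_get a k n gN gS u w c H Hc (eq_sym V0)) as [l2 [Hl2 [E2 L2]]].
    symmetry in V2. apply rb_spec in V2. destruct V2 as [l1 [Hl1 E1]].
    pose proof (notop a k n gN gS u w c l2 H Hc (eq_sym V) Hl2). pose proof (Pa l2 Hl2).
    rewrite L2, (labEV_spec a k u w c l1); auto.
    apply (overlap a k u w l2 l1 c); auto; lia.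
  -
    destruct (top_get a k n gN gS u w c H Hc (eq_sym V)) as [l2 [Hl2 [E2 L2]]].
    symmetry in V1. apply rb_spec in V1. destruct V1 as [l1 [Hl1 E1]].
    pose proof (nobot a k n gN gS u w c l2 H Hc (eq_sym V0) Hl2). pose proof (Pa l2 Hl2).
    rewrite L2, (labEV_spec a k u w (c-1) l1); auto.
    apply (overlap a k u w l2 l1 c); auto; lia.
  -
    symmetry in V1, V2. apply rb_spec in V1, V2. destruct V1 as [l1 [Hl1 E1]]. destruct V2 as [l2 [Hl2 E2]].
    rewrite (labEV_spec a k u w (c-1) l1), (labEV_spec a k u w c l2); auto.
    apply (overlap a k u w l1 l2 c); auto; lia.
  -
    destruct (top_get a k n gN gS u w c H Hc (eq_sym V)) as [l1 [Hl1 [E1 L1]]].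
    destruct (bot_get a k n gN gS u w c H Hc (eq_sym V0)) as [l2 [Hl2 [E2 L2]]].
    rewrite L1, L2. apply (wu_same a k n gN gS u w); auto; lia.
Qed.

Lemma conn_lab a k n gN gS u w e e' : HYP a k n gN gS u w -> Pcond a k u w ->
  conn a n (Dc a k gN gS u w) e e' -> labD a k gN gS u w e = labD a k gN gS u w e'.
Proof.
  intros H HP C. induction C.
  - apply (link_lab a k n gN gS u w); auto.
  - auto.
  - auto.
  - congruence.
Qed.

Lemma conn_step a n D e e' : link a n D e e' -> conn a n D e e'.
Proof. intros. apply rst_step. auto. Qed.
Lemma conn_sym a n D e e' : conn a n D e e' -> conn a n D e' e.
Proof. intros. apply rst_sym. auto. Qed.
Lemma conn_trans a n D e1 e2 e3 : conn a n D e1 e2 -> conn a n D e2 e3 -> conn a n D e1 e3.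
Proof. intros. eapply rst_trans; eauto. Qed.
Lemma conn_refl a n D e : conn a n D e e.
Proof. apply rst_refl. Qed.

Lemma path_EV a k n gN gS u w l : HYP a k n gN gS u w -> Pcond a k u w -> a <= l <= k -> u l < w l ->
  forall c, u l <= c < w l -> conn a n (Dc a k gN gS u w) (EV c) (EBot (u l)).
Proof.
  intros H HP Hl Hnd. pose proof H as H'. dH H'. pose proof HP as HP'. destruct HP' as [Pa [Pb Pc]].
  pose proof (in_S_maps a n u Hu l ltac:(lia)). pose proof (in_S_maps a n w Hw l ltac:(lia)).
  assert (IND : forall d : nat, forall c, c = u l + Z.of_nat d -> c < w l -> conn a n (Dc a k gN gS u w) (EV c) (EBot (u l))).
  { induction d; intros c Ec Hcw.
    - simpl in Ec. replace c with (u l) by lia.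
      assert (Hc : a <= u l <= n) by lia.
      get_valid a k n gN gS u w (u l) H HP Hc.
      assert (topb gN (u l) = false).
      { destruct (topb gN (u l)) eqn:T; auto. destruct (top_get a k n gN gS u w (u l) H Hc T) as [l1 [Hl1 [E1 _]]].
        assert (l1 = l) by (apply (wu_same a k n gN gS u w); auto). subst l1. lia. }
      assert (topb gS (u l) = true) by (apply (botb_spec a k n gN gS u w _ H Hc); eauto).
      assert (rb a k u w (u l) = true) by (apply rb_spec; exists l; split; auto; lia).
      apply conn_sym, conn_step. exists (u l). split; auto.
      destruct (Dc a k gN gS u w (u l)); simpl in *; try congruence. auto.
    - rewrite Nat2Z.inj_succ in Ec.
      assert (Hc : a <= c <= n) by lia.
      get_valid a k n gN gS u w c H HP Hc.
      assert (rb a k u w (c-1) = true) by (apply rb_spec; exists l; split; auto; lia).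
      assert (rb a k u w c = true) by (apply rb_spec; exists l; split; auto; lia).
      apply conn_trans with (EV (c-1)); [|apply IHd; lia].
      apply conn_sym, conn_step. exists c. split; auto.
      destruct (Dc a k gN gS u w c); simpl in *; try congruence; auto. }
  intros c Hc. apply (IND (Z.to_nat (c - u l))); lia.
Qed.

Lemma path_TB a k n gN gS u w l : HYP a k n gN gS u w -> Pcond a k u w -> a <= l <= k ->
  conn a n (Dc a k gN gS u w) (ETop (w l)) (EBot (u l)).
Proof.
  intros H HP Hl. pose proof H as H'. dH H'. pose proof HP as HP'. destruct HP' as [Pa [Pb Pc]].
  pose proof (in_S_maps a n u Hu l ltac:(lia)). pose proof (in_S_maps a n w Hw l ltac:(lia)).
  assert (Hc : a <= w l <= n) by lia.
  get_valid a k n gN gS u w (w l) H HP Hc.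
  assert (topb gN (w l) = true) by (apply (topb_spec a k n gN gS u w _ H Hc); eauto).
  pose proof (Pa l Hl).
  destruct (Z.eq_dec (u l) (w l)) as [E|E].
  - assert (topb gS (w l) = true) by (apply (botb_spec a k n gN gS u w _ H Hc); eauto).
    rewrite E. apply conn_step. exists (w l). split; auto.
    destruct (Dc a k gN gS u w (w l)); simpl in *; try congruence; auto.
  - assert (topb gS (w l) = false).
    { destruct (topb gS (w l)) eqn:T; auto. destruct (bot_get a k n gN gS u w (w l) H Hc T) as [l1 [Hl1 [E1 _]]].
      assert (l = l1) by (apply (wu_same a k n gN gS u w); auto). subst l1. lia. }
    assert (rb a k u w (w l - 1) = true) by (apply rb_spec; exists l; split; auto; lia).
    apply conn_trans with (EV (w l - 1)).
    + apply conn_step. exists (w l). split; auto.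
      destruct (Dc a k gN gS u w (w l)); simpl in *; try congruence; auto.
    + apply (path_EV a k n gN gS u w l); auto; lia.
Qed.

Lemma used_decomp a k n gN gS u w e : HYP a k n gN gS u w -> Pcond a k u w ->
  used a n (Dc a k gN gS u w) e ->
  exists l, a <= l <= k /\ labD a k gN gS u w e = l /\
    conn a n (Dc a k gN gS u w) e (EBot (u l)) /\ conn a n (Dc a k gN gS u w) e (ETop (w l)).
Proof.
  intros H HP U. pose proof (fun l Hl => path_TB a k n gN gS u w l H HP Hl) as PT.
  destruct e as [c|c|c].
  - apply used_top in U. destruct U as [Hc T].
    get_valid a k n gN gS u w c H HP Hc. rewrite V in T.
    destruct (top_get a k n gN gS u w c H Hc T) as [l [Hl [E L]]].
    exists l. split; auto. split; auto. subst c. split; auto. apply conn_refl.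
  - apply used_bot in U. destruct U as [Hc T].
    get_valid a k n gN gS u w c H HP Hc. rewrite V0 in T.
    destruct (bot_get a k n gN gS u w c H Hc T) as [l [Hl [E L]]].
    exists l. split; auto. split; auto. subst c. split; [apply conn_refl|]. apply conn_sym; auto.
  - apply used_EV in U.
    assert (rb a k u w c = true) as R.
    { destruct U as [[Hc T]|[Hc T]].
      - get_valid a k n gN gS u w c H HP Hc. congruence.
      - get_valid a k n gN gS u w (c+1) H HP Hc. replace (c + 1 - 1) with c in V1 by lia. congruence. }
    apply rb_spec in R. destruct R as [l [Hl E]].
    exists l. split; auto. simpl. split. apply labEV_spec; auto.
    assert (conn a n (Dc a k gN gS u w) (EV c) (EBot (u l))) by (apply (path_EV a k n gN gS u w l); auto; lia).
    split; auto. apply conn_trans with (EBot (u l)); auto. apply conn_sym; auto.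
Qed.

Lemma cross_ineq a k n gN gS u w c : HYP a k n gN gS u w -> Pcond a k u w -> a <= c <= n ->
  Dc a k gN gS u w c = Cross -> labD a k gN gS u w (ETop c) < labD a k gN gS u w (EV c).
Proof.
  intros H HP Hc E. pose proof H as H'. dH H'. pose proof HP as HP'. destruct HP' as [Pa [Pb Pc]].
  get_valid a k n gN gS u w c H HP Hc. rewrite E in *. simpl in *.
  destruct (top_get a k n gN gS u w c H Hc (eq_sym V)) as [l1 [Hl1 [E1 L1]]].
  destruct (bot_get a k n gN gS u w c H Hc (eq_sym V0)) as [l2 [Hl2 [E2 L2]]].
  assert (Eq12 : l1 = l2) by (apply (wu_same a k n gN gS u w); auto; lia). rewrite <- Eq12 in E2, L2.
  symmetry in V2. apply rb_spec in V2. destruct V2 as [l [Hl El]].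
  simpl. rewrite L1, (labEV_spec a k u w c l); auto.
  destruct (Z.eq_dec (u l) c) as [E3|E3].
  - rewrite <- E2 in E3. destruct Hu as [Ui _]. apply Ui in E3. subst l. lia.
  - apply (Pc l l1); auto; lia.
Qed.

Lemma Dc_BPD a k n gN gS u w : HYP a k n gN gS u w -> Pcond a k u w -> is_BPD a n (Dc a k gN gS u w).
Proof.
  intros H HP. pose proof H as H'. dH H'. split; [|split].
  - intros c Hc. assert (Hc2 : a <= c <= n) by lia.
    get_valid a k n gN gS u w c H HP Hc2.
    destruct (valid a k n gN gS u w (c+1) H HP ltac:(lia)) as [_ [_ [W _]]].
    replace (c + 1 - 1) with c in W by lia. congruence.
  - intros c c' Hc Hc' Ne Ec Ec' [[C1 C2]|[C1 C2]].
    + apply (conn_lab a k n gN gS u w) in C1; auto. simpl in C1.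
      get_valid a k n gN gS u w c H HP Hc. rewrite Ec in V. simpl in V.
      destruct (valid a k n gN gS u w c' H HP Hc') as [V' _]. rewrite Ec' in V'. simpl in V'.
      destruct (top_get a k n gN gS u w c H Hc (eq_sym V)) as [l1 [Hl1 [E1 L1]]].
      destruct (top_get a k n gN gS u w c' H Hc' (eq_sym V')) as [l2 [Hl2 [E2 L2]]].
      congruence.
    + apply (conn_lab a k n gN gS u w) in C1; auto.
      apply (conn_lab a k n gN gS u w) in C2; auto.
      pose proof (cross_ineq a k n gN gS u w c H HP Hc Ec).
      pose proof (cross_ineq a k n gN gS u w c' H HP Hc' Ec'). lia.
  - intros e U. destruct (used_decomp a k n gN gS u w e H HP U) as [l [Hl [_ [C1 C2]]]].
    pose proof (in_S_maps a n u Hu l ltac:(lia)). pose proof (in_S_maps a n w Hw l ltac:(lia)).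
    split.
    + exists (ETop (w l)). split; [left; exists (w l); split; auto; lia|]. split; auto.
      apply used_top. split; [lia|]. assert (Hc2 : a <= w l <= n) by lia.
      get_valid a k n gN gS u w (w l) H HP Hc2. rewrite V.
      apply (topb_spec a k n gN gS u w (w l) H Hc2). eauto.
    + exists (EBot (u l)). split; [left; exists (u l); split; auto; lia|]. split; auto.
      apply used_bot. split; [lia|]. assert (Hc2 : a <= u l <= n) by lia.
      get_valid a k n gN gS u w (u l) H HP Hc2. rewrite V0.
      apply (botb_spec a k n gN gS u w (u l) H Hc2). eauto.
Qed.

Lemma Dc_sat a k n gN gS u w : HYP a k n gN gS u w -> Pcond a k u w ->
  satisfies a n (Dc a k gN gS u w) gN None gS None.
Proof.
  intros H HP. pose proof H as H'. dH H'.
  exists (labD a k gN gS u w). split; [split|].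
  - intros e e' U U'. split.
    + apply (conn_lab a k n gN gS u w); auto.
    + intros E. destruct (used_decomp a k n gN gS u w e H HP U) as [l [Hl [L1 [C1 _]]]].
      destruct (used_decomp a k n gN gS u w e' H HP U') as [l' [Hl' [L2 [C2 _]]]].
      assert (Ell : l' = l) by congruence. rewrite Ell in C2.
      apply conn_trans with (EBot (u l)); auto. apply conn_sym; auto.
  - intros c Hc E. apply (cross_ineq a k n gN gS u w c); auto.
  - split.
    { split; [|intros X; congruence]. intros U. exfalso. apply used_EV in U.
      destruct U as [[Hc T]|[Hc T]]; [|lia].
      get_valid a k n gN gS u w n H HP Hc. rewrite (rb_hi a k n gN gS u w H) in V2. congruence. }
    split; [intros; discriminate|].
    split.
    { split; [|intros X; congruence]. intros U. exfalso. apply used_EV in U.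
      destruct U as [[Hc T]|[Hc T]]; [lia|].
      replace (a - 1 + 1) with a in * by lia.
      get_valid a k n gN gS u w a H HP Hc. rewrite (rb_lo a k n gN gS u w H) in V1. congruence. }
    split; [intros; discriminate|].
    split.
    + intros c Hc. split.
      * rewrite used_top. get_valid a k n gN gS u w c H HP Hc. rewrite V. unfold topb.
        destruct (gN c); split; [intros _; discriminate | intros _; split; auto | intros [_ F]; discriminate | intros F; exfalso; apply F; auto].
      * intros l E. simpl. apply labo_spec; auto.
    + intros c Hc. split.
      * rewrite used_bot. get_valid a k n gN gS u w c H HP Hc. rewrite V0. unfold topb.
        destruct (gS c); split; [intros _; discriminate | intros _; split; auto | intros [_ F]; discriminate | intros F; exfalso; apply F; auto].
      * intros l E. simpl. apply labo_spec; auto.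
Qed.

Definition SATL a n (D : tiling) (gN gS : Z -> option Z) (lab : edge -> Z) : Prop :=
  valid_labeling a n D lab /\ ~ used a n D (EV n) /\ ~ used a n D (EV (a - 1)) /\
  (forall c, a <= c <= n -> (used a n D (ETop c) <-> gN c <> None) /\ (forall l, gN c = Some l -> lab (ETop c) = l)) /\
  (forall c, a <= c <= n -> (used a n D (EBot c) <-> gS c <> None) /\ (forall l, gS c = Some l -> lab (EBot c) = l)).

Lemma sat_SATL a n D gN gS : satisfies a n D gN None gS None -> exists lab, SATL a n D gN gS lab.
Proof.
  intros [lab [VL [[E1 _] [_ [[W1 _] [_ [T B]]]]]]]. exists lab. split; auto.
  split. intros U. apply E1 in U. auto.
  split. intros U. apply W1 in U. auto. auto.
Qed.

Definition BC a k n gN gS u w D lab : Prop :=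
  HYP a k n gN gS u w /\ is_BPD a n D /\ SATL a n D gN gS lab.

Ltac dB HB := destruct HB as (H & (Cons & Cam & EE) & ((VL1 & VL2) & UEn & UEa & Tops & Bots)).

Lemma B_top a k n gN gS u w D lab c : BC a k n gN gS u w D lab -> a <= c <= n -> top_t (D c) = topb gN c.
Proof.
  intros HB Hc. dB HB. destruct (Tops c Hc) as [T _].
  apply eq_true_iff_eq. split; intros X.
  - assert (U : used a n D (ETop c)) by (apply used_top; auto). apply T in U. unfold topb; destruct (gN c); congruence.
  - unfold topb in X. assert (U : gN c <> None) by (destruct (gN c); congruence). apply T in U. apply used_top in U. tauto.
Qed.

Lemma B_bot a k n gN gS u w D lab c : BC a k n gN gS u w D lab -> a <= c <= n -> bot_t (D c) = topb gS c.
Proof.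
  intros HB Hc. dB HB. destruct (Bots c Hc) as [T _].
  apply eq_true_iff_eq. split; intros X.
  - assert (U : used a n D (EBot c)) by (apply used_bot; auto). apply T in U. unfold topb; destruct (gS c); congruence.
  - unfold topb in X. assert (U : gS c <> None) by (destruct (gS c); congruence). apply T in U. apply used_bot in U. tauto.
Qed.

Lemma B_EVl a k n gN gS u w D lab c : BC a k n gN gS u w D lab -> a <= c <= n ->
  (used a n D (EV (c - 1)) <-> uses_left (D c) = true).
Proof.
  intros HB Hc. dB HB. rewrite used_EV. replace (c - 1 + 1) with c by lia. split.
  - intros [[Hc' R]|[_ L]]; auto. rewrite Cons in R by lia. replace (c - 1 + 1) with c in R by lia. auto.
  - intros L. right. split; auto.
Qed.

Lemma B_EVr a k n gN gS u w D lab c : BC a k n gN gS u w D lab -> a <= c <= n ->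
  (used a n D (EV c) <-> uses_right (D c) = true).
Proof.
  intros HB Hc. dB HB. rewrite used_EV. split.
  - intros [[_ R]|[Hc' L]]; auto. rewrite Cons by lia. auto.
  - intros R. left. split; auto.
Qed.

Lemma B_link a k n gN gS u w D lab e e' : BC a k n gN gS u w D lab -> link a n D e e' -> lab e = lab e'.
Proof.
  intros HB Lk. dB HB. apply VL1.
  - exists e'. left. auto.
  - exists e. right. auto.
  - apply rst_step. auto.
Qed.

Lemma B_mklink a n D c e e' : a <= c <= n -> tile_link (D c) c e e' -> link a n D e e'.
Proof. intros. exists c. auto. Qed.

Lemma B_gS a k n gN gS u w D lab c : BC a k n gN gS u w D lab -> a <= c <= n -> bot_t (D c) = true ->
  exists l, a <= l <= k /\ u l = c /\ lab (EBot c) = l.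
Proof.
  intros HB Hc Bt. pose proof HB as HB'. dB HB'. rewrite (B_bot a k n gN gS u w D lab c HB Hc) in Bt.
  unfold topb in Bt. destruct (gS c) as [l|] eqn:E; [|discriminate].
  exists l. apply (gS_spec a k n gN gS u w c l H Hc) in E as E'. destruct E'. split; auto. split; auto.
  apply (Bots c Hc). auto.
Qed.

Lemma B_gN a k n gN gS u w D lab c : BC a k n gN gS u w D lab -> a <= c <= n -> top_t (D c) = true ->
  exists l, a <= l <= k /\ w l = c /\ lab (ETop c) = l.
Proof.
  intros HB Hc Bt. pose proof HB as HB'. dB HB'. rewrite (B_top a k n gN gS u w D lab c HB Hc) in Bt.
  unfold topb in Bt. destruct (gN c) as [l|] eqn:E; [|discriminate].
  exists l. apply (gN_spec a k n gN gS u w c l H Hc) in E as E'. destruct E'. split; auto. split; auto.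
  apply (Tops c Hc). auto.
Qed.

(* base: column u l with u l <> w l is an r-elbow *)
Lemma B0 a k n gN gS u w D lab l : BC a k n gN gS u w D lab -> a <= l <= k -> u l <> w l ->
  used a n D (EV (u l)) /\ lab (EV (u l)) = l.
Proof.
  intros HB Hl Ne. pose proof HB as HB'. dB HB'. pose proof H as H'. dH H'.
  pose proof (in_S_maps a n u Hu l ltac:(lia)) as Hc.
  assert (Bt : bot_t (D (u l)) = true).
  { rewrite (B_bot a k n gN gS u w D lab (u l) HB Hc). unfold topb. rewrite HgS; auto. }
  destruct (B_gS a k n gN gS u w D lab (u l) HB Hc Bt) as [l0 [Hl0 [E0 L0]]].
  destruct Hu as [Ui _]. apply Ui in E0. rewrite E0 in L0.
  destruct (D (u l)) eqn:E; simpl in Bt; try discriminate.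
  - exfalso. destruct (B_gN a k n gN gS u w D lab (u l) HB Hc ltac:(rewrite E; auto)) as [l1 [Hl1 [E1 L1]]].
    assert (lab (ETop (u l)) = lab (EBot (u l))) by (apply (B_link a k n gN gS u w D lab); auto;
      apply (B_mklink a n D (u l)); auto; rewrite E; simpl; auto).
    assert (l1 = l) as Q by congruence. rewrite Q in E1. apply Ne; congruence.
  - assert (Lk : link a n D (EBot (u l)) (EV (u l))) by (apply (B_mklink a n D (u l)); auto; rewrite E; simpl; auto).
    split. exists (EBot (u l)). right. auto.
    rewrite <- (B_link a k n gN gS u w D lab _ _ HB Lk). auto.
  - exfalso. destruct (B_gN a k n gN gS u w D lab (u l) HB Hc ltac:(rewrite E; auto)) as [l1 [Hl1 [E1 L1]]].
    assert (lab (ETop (u l)) = lab (EBot (u l))) by (apply (B_link a k n gN gS u w D lab); auto;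
      apply (B_mklink a n D (u l)); auto; rewrite E; simpl; auto).
    assert (l1 = l) as Q by congruence. rewrite Q in E1. apply Ne; congruence.
Qed.

Lemma B1 a k n gN gS u w D lab l : BC a k n gN gS u w D lab -> a <= l <= k -> u l < w l ->
  forall c, u l <= c < w l -> used a n D (EV c) /\ lab (EV c) = l.
Proof.
  intros HB Hl Hnd. pose proof HB as HB'. dB HB'. pose proof H as H'. dH H'.
  pose proof (in_S_maps a n w Hw l ltac:(lia)) as Mw.
  assert (IND : forall d : nat, forall c, c = u l + Z.of_nat d -> c < w l -> used a n D (EV c) /\ lab (EV c) = l).
  { induction d; intros c Ec Hcw.
    - simpl in Ec. replace c with (u l) by lia. apply (B0 a k n gN gS u w D lab l); auto; lia.
    - rewrite Nat2Z.inj_succ in Ec.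
      destruct (IHd (c - 1) ltac:(lia) ltac:(lia)) as [U Lb].
      pose proof (in_S_maps a n u Hu l ltac:(lia)) as Mu.
      assert (Hc : a <= c <= n) by lia.
      apply (B_EVl a k n gN gS u w D lab c HB Hc) in U.
      destruct (D c) eqn:E; simpl in U; try discriminate.
      + assert (Lk : link a n D (EV (c-1)) (EV c)) by (apply (B_mklink a n D c); auto; rewrite E; simpl; auto).
        split. exists (EV (c-1)). right. auto. rewrite <- (B_link a k n gN gS u w D lab _ _ HB Lk). auto.
      + exfalso. assert (Lk : link a n D (ETop c) (EV (c-1))) by (apply (B_mklink a n D c); auto; rewrite E; simpl; auto).
        destruct (B_gN a k n gN gS u w D lab c HB Hc ltac:(rewrite E; auto)) as [l1 [Hl1 [E1 L1]]].
        pose proof (B_link a k n gN gS u w D lab _ _ HB Lk).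
        assert (l1 = l) as Q by congruence. rewrite Q in E1. lia.
      + assert (Lk : link a n D (EV (c-1)) (EV c)) by (apply (B_mklink a n D c); auto; rewrite E; simpl; auto).
        split. exists (EV (c-1)). right. auto. rewrite <- (B_link a k n gN gS u w D lab _ _ HB Lk). auto. }
  intros c Hc. apply (IND (Z.to_nat (c - u l))); lia.
Qed.

Lemma B2l a k n gN gS u w D lab : BC a k n gN gS u w D lab ->
  forall c, used a n D (EV c) -> exists l, a <= l <= k /\ lab (EV c) = l /\ u l <= c.
Proof.
  intros HB. pose proof HB as HB'. dB HB'. pose proof H as H'. dH H'.
  assert (IND : forall d : nat, forall c, c = a + Z.of_nat d -> used a n D (EV c) ->
     exists l, a <= l <= k /\ lab (EV c) = l /\ u l <= c).
  { induction d; intros c Ec U.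
    - simpl in Ec. assert (Hc : a <= c <= n) by lia.
      apply (B_EVr a k n gN gS u w D lab c HB Hc) in U as R.
      destruct (D c) eqn:E; simpl in R; try discriminate.
      + exfalso. assert (Lk : link a n D (EV (c-1)) (EV c)) by (apply (B_mklink a n D c); auto; rewrite E; simpl; auto).
        apply UEa. replace (a - 1) with (c - 1) by lia. exists (EV c). left. auto.
      + assert (Lk : link a n D (EBot c) (EV c)) by (apply (B_mklink a n D c); auto; rewrite E; simpl; auto).
        destruct (B_gS a k n gN gS u w D lab c HB Hc ltac:(rewrite E; auto)) as [l1 [Hl1 [E1 L1]]].
        pose proof (B_link a k n gN gS u w D lab _ _ HB Lk). exists l1. split; auto. split; [congruence|lia].
      + exfalso. assert (Lk : link a n D (EV (c-1)) (EV c)) by (apply (B_mklink a n D c); auto; rewrite E; simpl; auto).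
        apply UEa. replace (a - 1) with (c - 1) by lia. exists (EV c). left. auto.
    - rewrite Nat2Z.inj_succ in Ec.
      assert (Hc : a <= c <= n).
      { pose proof U as U2. apply used_EV in U2. destruct U2 as [[? _]|[? _]]; lia. }
      apply (B_EVr a k n gN gS u w D lab c HB Hc) in U as R.
      destruct (D c) eqn:E; simpl in R; try discriminate.
      + assert (Lk : link a n D (EV (c-1)) (EV c)) by (apply (B_mklink a n D c); auto; rewrite E; simpl; auto).
        destruct (IHd (c-1) ltac:(lia)) as [l1 [Hl1 [L1 E1]]]. exists (EV c). left. auto.
        exists l1. split; auto. split; [|lia]. rewrite <- (B_link a k n gN gS u w D lab _ _ HB Lk). auto.
      + assert (Lk : link a n D (EBot c) (EV c)) by (apply (B_mklink a n D c); auto; rewrite E; simpl; auto).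
        destruct (B_gS a k n gN gS u w D lab c HB Hc ltac:(rewrite E; auto)) as [l1 [Hl1 [E1 L1]]].
        pose proof (B_link a k n gN gS u w D lab _ _ HB Lk). exists l1. split; auto. split; [congruence|lia].
      + assert (Lk : link a n D (EV (c-1)) (EV c)) by (apply (B_mklink a n D c); auto; rewrite E; simpl; auto).
        destruct (IHd (c-1) ltac:(lia)) as [l1 [Hl1 [L1 E1]]]. exists (EV c). left. auto.
        exists l1. split; auto. split; [|lia]. rewrite <- (B_link a k n gN gS u w D lab _ _ HB Lk). auto. }
  intros c U.
  assert (a <= c).
  { pose proof U as U2. apply used_EV in U2. destruct U2 as [[? _]|[? _]]; try lia.
    destruct (Z.eq_dec c (a - 1)). subst c. contradiction. lia. }
  apply (IND (Z.to_nat (c - a))); auto; lia.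
Qed.

Lemma B2r a k n gN gS u w D lab : BC a k n gN gS u w D lab ->
  forall c, used a n D (EV c) -> exists l, a <= l <= k /\ lab (EV c) = l /\ c < w l.
Proof.
  intros HB. pose proof HB as HB'. dB HB'. pose proof H as H'. dH H'.
  assert (IND : forall d : nat, forall c, c = n - Z.of_nat d -> used a n D (EV c) ->
     exists l, a <= l <= k /\ lab (EV c) = l /\ c < w l).
  { induction d; intros c Ec U.
    - simpl in Ec. replace c with n in U by lia. contradiction.
    - rewrite Nat2Z.inj_succ in Ec.
      assert (Hc : a <= c + 1 <= n).
      { pose proof U as U2. apply used_EV in U2. destruct U2 as [[? _]|[? _]]; lia. }
      assert (U1 : used a n D (EV (c + 1 - 1))) by (replace (c + 1 - 1) with c by lia; auto).
      apply (B_EVl a k n gN gS u w D lab (c+1) HB Hc) in U1 as R.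
      destruct (D (c+1)) eqn:E; simpl in R; try discriminate.
      + assert (Lk : link a n D (EV (c+1-1)) (EV (c+1))) by (apply (B_mklink a n D (c+1)); auto; rewrite E; simpl; auto).
        replace (c+1-1) with c in Lk by lia.
        destruct (IHd (c+1) ltac:(lia)) as [l1 [Hl1 [L1 E1]]]. exists (EV c). right. auto.
        exists l1. split; auto. split; [|lia]. rewrite (B_link a k n gN gS u w D lab _ _ HB Lk). auto.
      + assert (Lk : link a n D (ETop (c+1)) (EV (c+1-1))) by (apply (B_mklink a n D (c+1)); auto; rewrite E; simpl; auto).
        replace (c+1-1) with c in Lk by lia.
        destruct (B_gN a k n gN gS u w D lab (c+1) HB Hc ltac:(rewrite E; auto)) as [l1 [Hl1 [E1 L1]]].
        pose proof (B_link a k n gN gS u w D lab _ _ HB Lk). exists l1. split; auto. split; [congruence|lia].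
      + assert (Lk : link a n D (EV (c+1-1)) (EV (c+1))) by (apply (B_mklink a n D (c+1)); auto; rewrite E; simpl; auto).
        replace (c+1-1) with c in Lk by lia.
        destruct (IHd (c+1) ltac:(lia)) as [l1 [Hl1 [L1 E1]]]. exists (EV c). right. auto.
        exists l1. split; auto. split; [|lia]. rewrite (B_link a k n gN gS u w D lab _ _ HB Lk). auto. }
  intros c U.
  assert (c <= n).
  { pose proof U as U2. apply used_EV in U2. destruct U2 as [[? _]|[? _]]; lia. }
  apply (IND (Z.to_nat (n - c))); auto; lia.
Qed.

Lemma B2 a k n gN gS u w D lab c : BC a k n gN gS u w D lab -> used a n D (EV c) ->
  exists l, a <= l <= k /\ lab (EV c) = l /\ u l <= c < w l.
Proof.
  intros HB U. destruct (B2l a k n gN gS u w D lab HB c U) as [l1 [Hl1 [L1 E1]]].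
  destruct (B2r a k n gN gS u w D lab HB c U) as [l2 [Hl2 [L2 E2]]].
  assert (l1 = l2) as Q by congruence. rewrite <- Q in E2. exists l1. split; auto.
Qed.

Lemma B_nd a k n gN gS u w D lab l : BC a k n gN gS u w D lab -> a <= l <= k -> u l <> w l -> u l < w l.
Proof.
  intros HB Hl Ne. destruct (B0 a k n gN gS u w D lab l HB Hl Ne) as [U L].
  destruct (B2 a k n gN gS u w D lab (u l) HB U) as [l' [Hl' [L' E']]].
  assert (l' = l) as Q by congruence. rewrite Q in E'. lia.
Qed.

Lemma B_P a k n gN gS u w D lab : BC a k n gN gS u w D lab -> Pcond a k u w.
Proof.
  intros HB. pose proof HB as HB'. dB HB'. pose proof H as H'. dH H'.
  assert (Pa : forall l, a <= l <= k -> u l <= w l).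
  { intros l Hl. destruct (Z.eq_dec (u l) (w l)). lia. pose proof (B_nd a k n gN gS u w D lab l HB Hl n0). lia. }
  split; [exact Pa|split].
  - assert (Hlp : forall l l', a <= l <= k -> a <= l' <= k -> l <> l' -> u l < w l -> u l' < w l' ->
        u l < u l' -> u l' <= w l -> False).
    { intros l l' Hl Hl' Ne N1 N2 O1 O2.
      destruct (Z.eq_dec (u l') (w l)) as [E|E].
      - pose proof (in_S_maps a n u Hu l' ltac:(lia)) as Hc.
        assert (Bt : bot_t (D (u l')) = true).
        { rewrite (B_bot a k n gN gS u w D lab (u l') HB Hc). unfold topb. rewrite HgS; auto. }
        assert (Tt : top_t (D (u l')) = true).
        { rewrite (B_top a k n gN gS u w D lab (u l') HB Hc). unfold topb. rewrite E, HgN; auto. }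
        destruct (B_gS a k n gN gS u w D lab (u l') HB Hc Bt) as [l2 [Hl2 [E2 L2]]].
        destruct (B_gN a k n gN gS u w D lab (u l') HB Hc Tt) as [l1 [Hl1 [E1 L1]]].
        destruct Hu as [Ui _]. destruct Hw as [Wi _].
        apply Ui in E2. rewrite E in E1. apply Wi in E1. rewrite E1 in L1. rewrite E2 in L2.
        assert (lab (ETop (u l')) = lab (EBot (u l'))).
        { destruct (D (u l')) eqn:ED; simpl in Bt, Tt; try discriminate;
          apply (B_link a k n gN gS u w D lab _ _ HB); apply (B_mklink a n D (u l')); auto; rewrite ED; simpl; auto. }
        congruence.
      - destruct (B1 a k n gN gS u w D lab l HB Hl N1 (u l') ltac:(lia)) as [_ La].
        destruct (B1 a k n gN gS u w D lab l' HB Hl' N2 (u l') ltac:(lia)) as [_ Lb].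
        congruence. }
    intros l l' Hl Hl' Ne N1 N2.
    destruct (Z_lt_le_dec (w l) (u l')); auto. destruct (Z_lt_le_dec (w l') (u l)); auto. exfalso.
    destruct (Z.lt_total (u l) (u l')) as [O|[O|O]].
    + apply (Hlp l l'); auto; lia.
    + destruct Hu as [Ui _]. apply Ui in O. auto.
    + apply (Hlp l' l); auto; lia.
  - intros l l'' Hl Hl'' [O1 O2] E.
    pose proof (in_S_maps a n u Hu l'' ltac:(lia)) as Hc.
    destruct (B1 a k n gN gS u w D lab l HB Hl ltac:(lia) (u l'' - 1) ltac:(lia)) as [U1 _].
    destruct (B1 a k n gN gS u w D lab l HB Hl ltac:(lia) (u l'') ltac:(lia)) as [_ L2].
    apply (B_EVl a k n gN gS u w D lab (u l'') HB Hc) in U1.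
    assert (Bt : bot_t (D (u l'')) = true).
    { rewrite (B_bot a k n gN gS u w D lab (u l'') HB Hc). unfold topb. rewrite HgS; auto. }
    assert (Tt : top_t (D (u l'')) = true).
    { rewrite (B_top a k n gN gS u w D lab (u l'') HB Hc). unfold topb. rewrite E, HgN; auto. }
    assert (Cr : D (u l'') = Cross) by (destruct (D (u l'')); simpl in *; congruence).
    pose proof (VL2 (u l'') Hc Cr) as Ineq.
    destruct (B_gN a k n gN gS u w D lab (u l'') HB Hc Tt) as [l1 [Hl1 [E1 L1]]].
    destruct Hw as [Wi _]. rewrite E in E1. apply Wi in E1. rewrite E1 in L1. lia.
Qed.

Lemma B_unique a k n gN gS u w D lab : BC a k n gN gS u w D lab ->
  forall c, a <= c <= n -> D c = Dc a k gN gS u w c.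
Proof.
  intros HB c Hc. rewrite <- (tile_of_triple (D c)). unfold Dc.
  rewrite (B_top a k n gN gS u w D lab c HB Hc), (B_bot a k n gN gS u w D lab c HB Hc).
  f_equal. apply eq_true_iff_eq. rewrite <- (B_EVl a k n gN gS u w D lab c HB Hc), rb_spec. split.
  - intros U. destruct (B2 a k n gN gS u w D lab (c-1) HB U) as [l [Hl [_ E]]]. eauto.
  - intros [l [Hl E]]. apply (B1 a k n gN gS u w D lab l HB Hl ltac:(lia)). lia.
Qed.

Lemma tile_of_blank t b l : tile_of t b l = Blank <-> t = false /\ b = false /\ l = false.
Proof. destruct t, b, l; simpl; split; intros; try discriminate; intuition congruence. Qed.

Theorem lemma2p42 (a k n : Z) (gN gS : Z -> option Z) (u w : Z -> Z) :
  a <= k <= n ->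
  values_exactly a k n gN ->
  values_exactly a k n gS ->
  in_S a n w ->
  (forall l, a <= l <= k -> gN (w l) = Some l) ->
  (forall x y, k < x /\ x < y <= n -> w y < w x) ->
  in_S a n u ->
  (forall l, a <= l <= k -> gS (u l) = Some l) ->
  (forall x y, k < x /\ x < y <= n -> u y < u x) ->
  (kchain k u w <->
     exists D : tiling, is_BPD a n D /\ satisfies a n D gN None gS None) /\
  (kchain k u w ->
     exists D : tiling, is_BPD a n D /\ satisfies a n D gN None gS None /\
       (forall D' : tiling, is_BPD a n D' -> satisfies a n D' gN None gS None ->
          forall c, a <= c <= n -> D' c = D c) /\
       (forall c, a <= c <= n -> (D c = Blank <-> in_fix k n u w c))).
Proof.
  intros Hk VN VS Hw HgN Dw Hu HgS Du.
  assert (H : HYP a k n gN gS u w) by (unfold HYP; tauto).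
  split; [split|].
  - intros KC. destruct (kchain_CH a k n u w Hu Hw Du Dw KC) as [m [v [I [J C]]]].
    pose proof (ch_P a k n u w m v I J C) as HP.
    exists (Dc a k gN gS u w). split. apply Dc_BPD; auto. apply Dc_sat; auto.
  - intros [D [HB HS]]. destruct (sat_SATL a n D gN gS HS) as [lab SL].
    assert (BC a k n gN gS u w D lab) as HBC by (split; auto).
    apply (P_kchain a k n u w); auto. apply (B_P a k n gN gS u w D lab HBC).
  - intros KC. destruct (kchain_CH a k n u w Hu Hw Du Dw KC) as [m [v [I [J C]]]].
    pose proof (ch_P a k n u w m v I J C) as HP.
    exists (Dc a k gN gS u w). split; [apply Dc_BPD; auto|]. split; [apply Dc_sat; auto|]. split.
    + intros D' HB HS c Hc. destruct (sat_SATL a n D' gN gS HS) as [lab SL].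
      apply (B_unique a k n gN gS u w D' lab); auto. split; auto.
    + intros c Hc. unfold Dc. rewrite tile_of_blank. split.
      * intros [T [B R]].
        destruct Hu as [Ui [Us Uf]].
        destruct (Us c) as [r Er].
        assert (Hr : k < r <= n).
        { destruct (Z_le_gt_dec a r); [|rewrite Uf in Er by lia; lia].
          destruct (Z_le_gt_dec r n); [|rewrite Uf in Er by lia; lia].
          destruct (Z_le_gt_dec r k); [|lia].
          exfalso. apply (nobot a k n gN gS u w c r H Hc B); auto; lia. }
        exists r. split; auto. split; auto.
        destruct (Z.eq_dec (u r) (w r)) as [E|E]; auto. exfalso.
        destruct (ch_blank2 a k n u w m v I J r C Hr E) as [l [Hl O]].
        pose proof (notop a k n gN gS u w c l H Hc T Hl).
        assert (rb a k u w (c - 1) = true) by (apply rb_spec; exists l; split; auto; lia). congruence.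
      * intros [t [Ht [E Ec]]]. subst c.
        destruct Hu as [Ui [Us Uf]]. destruct Hw as [Wi [Ws Wf]].
        split; [|split].
        -- destruct (topb gN (u t)) eqn:T; auto.
           apply (topb_spec a k n gN gS u w _ H Hc) in T. destruct T as [l [Hl El]].
           rewrite E in El. apply Wi in El. lia.
        -- destruct (topb gS (u t)) eqn:T; auto.
           apply (botb_spec a k n gN gS u w _ H Hc) in T. destruct T as [l [Hl El]].
           apply Ui in El. lia.
        -- destruct (rb a k u w (u t - 1)) eqn:R; auto. exfalso.
           apply rb_spec in R. destruct R as [l [Hl El]].
           apply (ch_blank1 a k n u w m v I J t C Ht E l ltac:(lia)).
           split; [lia|]. destruct (Z.eq_dec (u t) (w l)) as [E2|E2]; [|lia].
           rewrite E in E2. apply Wi in E2. lia.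
Qed.
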